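(* For all session types $S,T\in\mathcal{ST}$: $S\leq T$ (Gay–Hole subtyping) if and only if $\mathcal{M}(S)\sqsubseteq\mathcal{M}(T)$, where $\sqsubseteq$ is the peer subcontract preorder on higher-order session contracts.
   Context: Session types. Fix a set $BT$ of base types with a preorder $\leq_{\mathsf b}$ and a countable set $\mathcal L$ of labels. Session type terms: $T::=\mathsf{end}\mid ?[M]T\mid ![M]T\mid \&\langle l_1{:}T_1,\dots,l_n{:}T_n\rangle\mid \oplus\langle l_1{:}T_1,\dots,l_n{:}T_n\rangle\mid \mu X.T\mid X$ ($n\ge1$, labels distinct), with message types $M::=T\mid \mathtt t$, $\mathtt t\in BT$. A term is guarded if in every subterm $\mu X.T'$ every occurrence of $X$ in $T'$ lies under a constructor other than $\mu$; $\mathcal{ST}$ is the set of closed guarded terms. $\mathrm{unfold}(\mu X.T')=\mathrm{unfold}(T'[\mu X.T'/X])$, and $\mathrm{unfold}(T)=T$ otherwise. For $R\subseteq\mathcal{ST}^2$, $F_{\leq}(R)$ is the set of $(T,S)$ such that: if $\mathrm{unfold}(T)=\mathsf{end}$ then $\mathrm{unfold}(S)=\mathsf{end}$; if $\mathrm{unfold}(T)=?[\mathtt t_1]S_1$ then $\mathrm{unfold}(S)=?[\mathtt t_2]S_2$ with $S_1RS_2$, $\mathtt t_1\leq_{\mathsf b}\mathtt t_2$; if $\mathrm{unfold}(T)=![\mathtt t_1]S_1$ then $\mathrm{unfold}(S)=![\mathtt t_2]S_2$ with $S_1RS_2$, $\mathtt t_2\leq_{\mathsf b}\mathtt t_1$;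 if $\mathrm{unfold}(T)=![T_1]S_1$ then $\mathrm{unfold}(S)=![T_2]S_2$ with $S_1RS_2$, $T_2RT_1$; if $\mathrm{unfold}(T)=?[T_1]S_1$ then $\mathrm{unfold}(S)=?[T_2]S_2$ with $S_1RS_2$, $T_1RT_2$; if $\mathrm{unfold}(T)=\&\langle l_1{:}T_1,\dots,l_m{:}T_m\rangle$ then $\mathrm{unfold}(S)=\&\langle l_1{:}S_1,\dots,l_n{:}S_n\rangle$ with $m\le n$ and $T_iRS_i$ for $i\le m$; if $\mathrm{unfold}(T)=\oplus\langle l_1{:}T_1,\dots,l_m{:}T_m\rangle$ then $\mathrm{unfold}(S)=\oplus\langle l_1{:}S_1,\dots,l_n{:}S_n\rangle$ with $n\le m$ and $T_iRS_i$ for $i\le n$. Subtyping $\leq$ is the greatest $R$ with $R\subseteq F_\leq(R)$. Contracts. Contract terms: $\sigma::=\mathbf 1\mid ?\mathtt t.\sigma\mid !\mathtt t.\sigma\mid !(\sigma).\sigma\mid ?(\sigma).\sigma\mid \sum_{i\in I}?l_i.\sigma_i\mid \bigoplus_{i\in I}!l_i.\sigma_i\mid \mu x.\sigma\mid x$ ($I$ finite nonempty, labels distinct); $\mathcal{SC}$ is the set of closed guarded contract terms; unfold is defined as for types. Transitions: $\mathbf 1\xrightarrow{\checkmark}$; $\lambda.\sigma\xrightarrow{\lambda}\sigma$ for each prefix $\lambda\in\{?\mathtt t,!\mathtt t,?(\rho),!(\rho),!l\}$ (a one-branch internal sum $!l.\sigma$ is a prefix); $\bigoplus_{i\in I}!l_i.\sigma_i\xrightarrow{\tau}!l_i.\sigma_i$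 for each $i$ when $|I|>1$; $\sum_{i\in I}?l_i.\sigma_i\xrightarrow{?l_i}\sigma_i$; $\mu x.\sigma\xrightarrow{\tau}\sigma[\mu x.\sigma/x]$. For $B\subseteq\mathcal{SC}^2$, $\lambda_1\bowtie_B\lambda_2$ iff $(\lambda_1,\lambda_2)$ is $(!l,?l)$, $(?l,!l)$, $(!\mathtt t_1,?\mathtt t_2)$ with $\mathtt t_1\leq_{\mathsf b}\mathtt t_2$, $(?\mathtt t_1,!\mathtt t_2)$ with $\mathtt t_2\leq_{\mathsf b}\mathtt t_1$, $(!(\sigma_1),?(\sigma_2))$ with $\sigma_1B\sigma_2$, or $(?(\sigma_1),!(\sigma_2))$ with $\sigma_2B\sigma_1$. Then $\rho\|\sigma\xrightarrow{\tau}_B\rho'\|\sigma$ if $\rho\xrightarrow\tau\rho'$; $\rho\|\sigma\xrightarrow\tau_B\rho\|\sigma'$ if $\sigma\xrightarrow\tau\sigma'$; $\rho\|\sigma\xrightarrow\tau_B\rho'\|\sigma'$ if $\rho\xrightarrow{\lambda_1}\rho'$, $\sigma\xrightarrow{\lambda_2}\sigma'$, $\lambda_1\bowtie_B\lambda_2$. $B$-peer compliance $\dashv_B$ is the greatest $R\subseteq\mathcal{SC}^2$ such that whenever $\rho R\sigma$: if $\rho\|\sigma$ has no $\xrightarrow\tau_B$ move then $\rho\xrightarrow\checkmark$ and $\sigma\xrightarrow\checkmark$; and if $\rho\|\sigma\xrightarrow\tau_B\rho'\|\sigma'$ then $\rho'R\sigma'$. $\sigma_1\sqsubseteq_B\sigma_2$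 iff for all $\rho\in\mathcal{SC}$, $\rho\dashv_B\sigma_1$ implies $\rho\dashv_B\sigma_2$. The peer subcontract preorder $\sqsubseteq$ is the greatest fixed point of the monotone map $B\mapsto\sqsubseteq_B$ on the complete lattice of preorders on $\mathcal{SC}$ ordered by inclusion. Translation $\mathcal M$: $\mathcal M(\mathsf{end})=\mathbf 1$, $\mathcal M(![\mathtt t]S)=!\mathtt t.\mathcal M(S)$, $\mathcal M(?[\mathtt t]S)=?\mathtt t.\mathcal M(S)$, $\mathcal M(![T]S)=!(\mathcal M(T)).\mathcal M(S)$, $\mathcal M(?[T]S)=?(\mathcal M(T)).\mathcal M(S)$, $\mathcal M(\&\langle l_i{:}S_i\rangle)=\sum_i ?l_i.\mathcal M(S_i)$, $\mathcal M(\oplus\langle l_i{:}S_i\rangle)=\bigoplus_i !l_i.\mathcal M(S_i)$, $\mathcal M(\mu X.S)=\mu x.\mathcal M(S)$, $\mathcal M(X)=x$. *)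

(* Defs.v *)
From Stdlib Require Import List Arith RelationClasses.
Import ListNotations.
Set Implicit Arguments.

Definition label := nat.
Definition tvar := nat.

(* Session type terms; message types M ::= T | t are split into the *)
(* constructors ...B (base-type message) and ...S (session message). *)
Inductive st (BT : Type) : Type :=
| TEnd
| TInB (t : BT) (s : st BT)
| TOutB (t : BT) (s : st BT)
| TInS (m s : st BT)
| TOutS (m s : st BT)
| TBra (bs : list (label * st BT))
| TSel (bs : list (label * st BT))
| TMu (x : tvar) (s : st BT)
| TVar (x : tvar).
Arguments TEnd {BT}.
Arguments TVar {BT}.

Fixpoint st_subst BT (x : tvar) (u t : st BT) : st BT :=
  match t with
  | TEnd => TEnd
  | TInB b s => TInB b (st_subst x u s)
  | TOutB b s => TOutB b (st_subst x u s)
  | TInS m s => TInS (st_subst x u m) (st_subst x u s)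
  | TOutS m s => TOutS (st_subst x u m) (st_subst x u s)
  | TBra bs => TBra (map (fun p => (fst p, st_subst x u (snd p))) bs)
  | TSel bs => TSel (map (fun p => (fst p, st_subst x u (snd p))) bs)
  | TMu y s => if Nat.eqb x y then TMu y s else TMu y (st_subst x u s)
  | TVar y => if Nat.eqb x y then u else TVar y
  end.

Fixpoint st_fv BT (t : st BT) : list tvar :=
  match t with
  | TEnd => []
  | TInB _ s | TOutB _ s => st_fv s
  | TInS m s | TOutS m s => st_fv m ++ st_fv s
  | TBra bs | TSel bs => flat_map (fun p => st_fv (snd p)) bs
  | TMu y s => remove Nat.eq_dec y (st_fv s)
  | TVar y => [y]
  end.

(* x occurs in t reachable through mu-constructors only (i.e. unguarded) *)
Fixpoint st_ug BT (x : tvar) (t : st BT) : Prop :=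
  match t with
  | TVar y => y = x
  | TMu y s => y <> x /\ st_ug x s
  | _ => False
  end.

Fixpoint st_ok BT (t : st BT) : Prop :=
  match t with
  | TEnd => True
  | TInB _ s | TOutB _ s => st_ok s
  | TInS m s | TOutS m s => st_ok m /\ st_ok s
  | TBra bs | TSel bs =>
      bs <> [] /\ NoDup (map fst bs) /\
      fold_right (fun p acc => st_ok (snd p) /\ acc) True bs
  | TMu y s => ~ st_ug y s /\ st_ok s
  | TVar _ => True
  end.

Definition ST BT (t : st BT) : Prop := st_fv t = [] /\ st_ok t.

Fixpoint mu_depth BT (t : st BT) : nat :=
  match t with TMu _ s => S (mu_depth s) | _ => 0 end.

Fixpoint st_unfold_n BT (n : nat) (t : st BT) : st BT :=
  match n with
  | 0 => t
  | S n => match t with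
           | TMu x s => st_unfold_n n (st_subst x (TMu x s) s)
           | _ => t
           end
  end.

(* unfold(mu X.T') = unfold(T'[mu X.T'/X]); unfold(T) = T otherwise.
   On guarded closed terms exactly mu_depth t unfoldings are needed. *)
Definition st_unfold BT (t : st BT) : st BT := st_unfold_n (mu_depth t) t.

Definition F_le BT (leb : BT -> BT -> Prop) (R : st BT -> st BT -> Prop)
    (T S : st BT) : Prop :=
  ST T /\ ST S /\
  match st_unfold T with
  | TEnd => st_unfold S = TEnd
  | TInB t1 S1 => exists t2 S2, st_unfold S = TInB t2 S2 /\ R S1 S2 /\ leb t1 t2
  | TOutB t1 S1 => exists t2 S2, st_unfold S = TOutB t2 S2 /\ R S1 S2 /\ leb t2 t1
  | TOutS T1 S1 => exists T2 S2, st_unfold S = TOutS T2 S2 /\ R S1 S2 /\ R T2 T1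
  | TInS T1 S1 => exists T2 S2, st_unfold S = TInS T2 S2 /\ R S1 S2 /\ R T1 T2
  | TBra bs => exists bs', st_unfold S = TBra bs' /\
      forall l Ti, In (l, Ti) bs -> exists Si, In (l, Si) bs' /\ R Ti Si
  | TSel bs => exists bs', st_unfold S = TSel bs' /\
      forall l Si, In (l, Si) bs' -> exists Ti, In (l, Ti) bs /\ R Ti Si
  | _ => True
  end.

Definition subtype BT (leb : BT -> BT -> Prop) (T S : st BT) : Prop :=
  exists R : st BT -> st BT -> Prop,
    (forall a b, R a b -> F_le leb R a b) /\ R T S.

Inductive ct (BT : Type) : Type :=
| C1
| CInB (t : BT) (s : ct BT)
| COutB (t : BT) (s : ct BT)
| CInC (c s : ct BT)
| COutC (c s : ct BT)
| CExt (bs : list (label * ct BT))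
| CInt (bs : list (label * ct BT))
| CMu (x : tvar) (s : ct BT)
| CVar (x : tvar).
Arguments C1 {BT}.
Arguments CVar {BT}.

Fixpoint ct_subst BT (x : tvar) (u t : ct BT) : ct BT :=
  match t with
  | C1 => C1
  | CInB b s => CInB b (ct_subst x u s)
  | COutB b s => COutB b (ct_subst x u s)
  | CInC m s => CInC (ct_subst x u m) (ct_subst x u s)
  | COutC m s => COutC (ct_subst x u m) (ct_subst x u s)
  | CExt bs => CExt (map (fun p => (fst p, ct_subst x u (snd p))) bs)
  | CInt bs => CInt (map (fun p => (fst p, ct_subst x u (snd p))) bs)
  | CMu y s => if Nat.eqb x y then CMu y s else CMu y (ct_subst x u s)
  | CVar y => if Nat.eqb x y then u else CVar y
  end.

Fixpoint ct_fv BT (t : ct BT) : list tvar :=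
  match t with
  | C1 => []
  | CInB _ s | COutB _ s => ct_fv s
  | CInC m s | COutC m s => ct_fv m ++ ct_fv s
  | CExt bs | CInt bs => flat_map (fun p => ct_fv (snd p)) bs
  | CMu y s => remove Nat.eq_dec y (ct_fv s)
  | CVar y => [y]
  end.

Fixpoint ct_ug BT (x : tvar) (t : ct BT) : Prop :=
  match t with
  | CVar y => y = x
  | CMu y s => y <> x /\ ct_ug x s
  | _ => False
  end.

Fixpoint ct_ok BT (t : ct BT) : Prop :=
  match t with
  | C1 => True
  | CInB _ s | COutB _ s => ct_ok s
  | CInC m s | COutC m s => ct_ok m /\ ct_ok s
  | CExt bs | CInt bs =>
      bs <> [] /\ NoDup (map fst bs) /\
      fold_right (fun p acc => ct_ok (snd p) /\ acc) True bs
  | CMu y s => ~ ct_ug y s /\ ct_ok s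
  | CVar _ => True
  end.

Definition SC BT (t : ct BT) : Prop := ct_fv t = [] /\ ct_ok t.

(* Actions (tau and visible prefixes; the tick is handled by [ticks]) *)
Inductive act (BT : Type) : Type :=
| ATau
| AInB (t : BT) | AOutB (t : BT)
| AInC (c : ct BT) | AOutC (c : ct BT)
| AInL (l : label) | AOutL (l : label).
Arguments ATau {BT}.
Arguments AInL {BT}.
Arguments AOutL {BT}.

Inductive cstep BT : ct BT -> act BT -> ct BT -> Prop :=
| cs_inb t s : cstep (CInB t s) (AInB t) s
| cs_outb t s : cstep (COutB t s) (AOutB t) s
| cs_inc c s : cstep (CInC c s) (AInC c) s
| cs_outc c s : cstep (COutC c s) (AOutC c) s
| cs_outl l s : cstep (CInt [(l, s)]) (AOutL l) s
| cs_int bs l s : 1 < length bs -> In (l, s) bs -> cstep (CInt bs) ATau (CInt [(l, s)])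
| cs_ext bs l s : In (l, s) bs -> cstep (CExt bs) (AInL l) s
| cs_mu x s : cstep (CMu x s) ATau (ct_subst x (CMu x s) s).

Definition ticks BT (s : ct BT) : Prop := s = C1.

Definition bowtie BT (leb : BT -> BT -> Prop) (B : ct BT -> ct BT -> Prop)
    (a1 a2 : act BT) : Prop :=
  match a1, a2 with
  | AOutL l1, AInL l2 => l1 = l2
  | AInL l1, AOutL l2 => l1 = l2
  | AOutB t1, AInB t2 => leb t1 t2
  | AInB t1, AOutB t2 => leb t2 t1
  | AOutC s1, AInC s2 => B s1 s2
  | AInC s1, AOutC s2 => B s2 s1
  | _, _ => False
  end.

Inductive pstep BT (leb : BT -> BT -> Prop) (B : ct BT -> ct BT -> Prop)
  : ct BT -> ct BT -> ct BT -> ct BT -> Prop :=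
| ps_l r s r' : cstep r ATau r' -> pstep leb B r s r' s
| ps_r r s s' : cstep s ATau s' -> pstep leb B r s r s'
| ps_sync r s r' s' a1 a2 :
    cstep r a1 r' -> cstep s a2 s' -> bowtie leb B a1 a2 -> pstep leb B r s r' s'.

Definition compliant BT (leb : BT -> BT -> Prop) (B : ct BT -> ct BT -> Prop)
    (rho sigma : ct BT) : Prop :=
  exists R : ct BT -> ct BT -> Prop,
    (forall a b, R a b ->
       SC a /\ SC b /\
       ((~ exists a' b', pstep leb B a b a' b') -> ticks a /\ ticks b) /\
       (forall a' b', pstep leb B a b a' b' -> R a' b')) /\
    R rho sigma.

Definition subc_B BT (leb : BT -> BT -> Prop) (B : ct BT -> ct BT -> Prop)
    (s1 s2 : ct BT) : Prop :=
  SC s1 /\ SC s2 /\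
  forall rho, SC rho -> compliant leb B rho s1 -> compliant leb B rho s2.

Definition preorder_on_SC BT (B : ct BT -> ct BT -> Prop) : Prop :=
  (forall a b, B a b -> SC a /\ SC b) /\
  (forall a, SC a -> B a a) /\
  (forall a b c, B a b -> B b c -> B a c).

(* Peer subcontract preorder: greatest fixed point of B |-> [=_B in the
   lattice of preorders on SC (= union of post-fixed preorders, Knaster-Tarski) *)
Definition peer_sub BT (leb : BT -> BT -> Prop) (s1 s2 : ct BT) : Prop :=
  exists B : ct BT -> ct BT -> Prop,
    preorder_on_SC B /\ (forall a b, B a b -> subc_B leb B a b) /\ B s1 s2.

Fixpoint trM BT (t : st BT) : ct BT :=
  match t with
  | TEnd => C1
  | TOutB b s => COutB b (trM s)
  | TInB b s => CInB b (trM s)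
  | TOutS m s => COutC (trM m) (trM s)
  | TInS m s => CInC (trM m) (trM s)
  | TBra bs => CExt (map (fun p => (fst p, trM (snd p))) bs)
  | TSel bs => CInt (map (fun p => (fst p, trM (snd p))) bs)
  | TMu x s => CMu x (trM s)
  | TVar x => CVar x
  end.

(* Main.v *)
Require Import Defs.
From Stdlib Require Import List Arith RelationClasses Classical Lia Relation_Operators.
Import ListNotations.
Set Implicit Arguments.

Section Syn.
Variable BT : Type.

Section CtInd.
Variable P : ct BT -> Prop.
Hypothesis h1 : P C1.
Hypothesis h2 : forall b s, P s -> P (CInB b s).
Hypothesis h3 : forall b s, P s -> P (COutB b s).
Hypothesis h4 : forall c s, P c -> P s -> P (CInC c s).
Hypothesis h5 : forall c s, P c -> P s -> P (COutC c s).
Hypothesis h6 : forall bs, Forall (fun p => P (snd p)) bs -> P (CExt bs).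
Hypothesis h7 : forall bs, Forall (fun p => P (snd p)) bs -> P (CInt bs).
Hypothesis h8 : forall x s, P s -> P (CMu x s).
Hypothesis h9 : forall x, P (CVar x).
Fixpoint ct_ind' (t : ct BT) : P t :=
  match t with
  | C1 => h1
  | CInB b s => @h2 b s (ct_ind' s)
  | COutB b s => @h3 b s (ct_ind' s)
  | CInC c s => @h4 c s (ct_ind' c) (ct_ind' s)
  | COutC c s => @h5 c s (ct_ind' c) (ct_ind' s)
  | CExt bs => @h6 bs ((fix go (l : list (label * ct BT)) : Forall (fun p => P (snd p)) l :=
       match l with
       | [] => Forall_nil _
       | (a, s) :: l' => @Forall_cons _ (fun p => P (snd p)) (a, s) l' (ct_ind' s) (go l')
       end) bs)
  | CInt bs => @h7 bs ((fix go (l : list (label * ct BT)) : Forall (fun p => P (snd p)) l :=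
       match l with
       | [] => Forall_nil _
       | (a, s) :: l' => @Forall_cons _ (fun p => P (snd p)) (a, s) l' (ct_ind' s) (go l')
       end) bs)
  | CMu x s => @h8 x s (ct_ind' s)
  | CVar x => h9 x
  end.
End CtInd.

Section StInd.
Variable P : st BT -> Prop.
Hypothesis h1 : P TEnd.
Hypothesis h2 : forall b s, P s -> P (TInB b s).
Hypothesis h3 : forall b s, P s -> P (TOutB b s).
Hypothesis h4 : forall c s, P c -> P s -> P (TInS c s).
Hypothesis h5 : forall c s, P c -> P s -> P (TOutS c s).
Hypothesis h6 : forall bs, Forall (fun p => P (snd p)) bs -> P (TBra bs).
Hypothesis h7 : forall bs, Forall (fun p => P (snd p)) bs -> P (TSel bs).
Hypothesis h8 : forall x s, P s -> P (TMu x s).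
Hypothesis h9 : forall x, P (TVar x).
Fixpoint st_ind' (t : st BT) : P t :=
  match t with
  | TEnd => h1
  | TInB b s => @h2 b s (st_ind' s)
  | TOutB b s => @h3 b s (st_ind' s)
  | TInS c s => @h4 c s (st_ind' c) (st_ind' s)
  | TOutS c s => @h5 c s (st_ind' c) (st_ind' s)
  | TBra bs => @h6 bs ((fix go (l : list (label * st BT)) : Forall (fun p => P (snd p)) l :=
       match l with
       | [] => Forall_nil _
       | (a, s) :: l' => @Forall_cons _ (fun p => P (snd p)) (a, s) l' (st_ind' s) (go l')
       end) bs)
  | TSel bs => @h7 bs ((fix go (l : list (label * st BT)) : Forall (fun p => P (snd p)) l :=
       match l with
       | [] => Forall_nil _
       | (a, s) :: l' => @Forall_cons _ (fun p => P (snd p)) (a, s) l' (st_ind' s) (go l')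
       end) bs)
  | TMu x s => @h8 x s (st_ind' s)
  | TVar x => h9 x
  end.
End StInd.

Lemma fold_Forall (A : Type) (Q : A -> Prop) (l : list A) :
  fold_right (fun p acc => Q p /\ acc) True l <-> Forall Q l.
Proof.
  induction l; simpl; split; intros H; auto.
  - destruct H; constructor; tauto.
  - inversion H; subst; tauto.
Qed.

Lemma nil_iff (A : Type) (l : list A) : l = [] <-> forall z, ~ In z l.
Proof.
  split; intros H; subst; auto.
  destruct l as [|a l]; auto. exfalso; apply (H a); simpl; auto.
Qed.

Lemma nodup_uniq (A : Type) (bs : list (label * A)) l x y :
  NoDup (map fst bs) -> In (l, x) bs -> In (l, y) bs -> x = y.
Proof.
  induction bs as [|[l0 a] bs IH]; simpl; intros Hn H1 H2; [contradiction|].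
  apply NoDup_cons_iff in Hn as [Hn1 Hn2].
  destruct H1 as [H1|H1]; destruct H2 as [H2|H2].
  - inversion H1; inversion H2; subst; auto.
  - inversion H1; subst. exfalso; apply Hn1. apply in_map_iff. exists (l, y); auto.
  - inversion H2; subst. exfalso; apply Hn1. apply in_map_iff. exists (l, x); auto.
  - auto.
Qed.

Lemma map_fst_pair (A B : Type) (f : A -> B) (bs : list (label * A)) :
  map fst (map (fun p => (fst p, f (snd p))) bs) = map fst bs.
Proof. rewrite map_map; reflexivity. Qed.

Lemma ct_ug_fv x (t : ct BT) : ct_ug x t -> In x (ct_fv t).
Proof.
  induction t; simpl; try tauto.
  all: try (intros [H1 H2]; apply in_in_remove; auto).
  all: try (intros ->; auto).
Qed.

Lemma ct_fv_subst x (u t : ct BT) z :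
  In z (ct_fv (ct_subst x u t)) -> (In z (ct_fv t) /\ z <> x) \/ In z (ct_fv u).
Proof.
  revert z. induction t using ct_ind'; simpl; intros z Hz; auto; try contradiction.
  - rewrite in_app_iff in *. destruct Hz as [Hz|Hz]; [destruct (IHt1 _ Hz)|destruct (IHt2 _ Hz)]; tauto.
  - rewrite in_app_iff in *. destruct Hz as [Hz|Hz]; [destruct (IHt1 _ Hz)|destruct (IHt2 _ Hz)]; tauto.
  - apply in_flat_map in Hz as [p [Hp Hz]]. apply in_map_iff in Hp as [q [<- Hq]].
    simpl in Hz. rewrite Forall_forall in H. destruct (H q Hq z Hz) as [[A B]|A]; auto.
    left; split; auto. apply in_flat_map; eauto.
  - apply in_flat_map in Hz as [p [Hp Hz]]. apply in_map_iff in Hp as [q [<- Hq]].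
    simpl in Hz. rewrite Forall_forall in H. destruct (H q Hq z Hz) as [[A B]|A]; auto.
    left; split; auto. apply in_flat_map; eauto.
  - destruct (Nat.eqb_spec x x0).
    + subst. simpl in Hz. pose proof (in_remove _ _ _ _ Hz) as [Hz1 Hz2].
      left; split; auto.
    + simpl in Hz. apply in_remove in Hz as [Hz Hne]. destruct (IHt _ Hz) as [[A B]|A]; auto.
      left; split; auto. apply in_in_remove; auto.
  - destruct (Nat.eqb_spec x x0); auto. simpl in Hz. destruct Hz as [<-|[]]. left; auto.
Qed.

Lemma ct_ug_subst x (u t : ct BT) y :
  ct_fv u = [] -> ct_ug y (ct_subst x u t) -> ct_ug y t.
Proof.
  intros Hu. induction t; simpl; auto.
  - destruct (Nat.eqb_spec x x0); simpl; tauto.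
  - destruct (Nat.eqb_spec x x0); simpl; auto.
    intros H. apply ct_ug_fv in H. rewrite Hu in H. contradiction.
Qed.

Lemma ct_ok_iff_ext (bs : list (label * ct BT)) :
  ct_ok (CExt bs) <-> bs <> [] /\ NoDup (map fst bs) /\ Forall (fun p => ct_ok (snd p)) bs.
Proof. simpl. rewrite (@fold_Forall _ (fun p => ct_ok (snd p))). tauto. Qed.
Lemma ct_ok_iff_int (bs : list (label * ct BT)) :
  ct_ok (CInt bs) <-> bs <> [] /\ NoDup (map fst bs) /\ Forall (fun p => ct_ok (snd p)) bs.
Proof. simpl. rewrite (@fold_Forall _ (fun p => ct_ok (snd p))). tauto. Qed.

Lemma map_nonnil (A B : Type) (f : A -> B) l : l <> [] -> map f l <> [].
Proof. destruct l; simpl; congruence. Qed.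

Lemma ct_ok_subst x (u t : ct BT) :
  ct_ok u -> ct_fv u = [] -> ct_ok t -> ct_ok (ct_subst x u t).
Proof.
  intros Hu Hf. induction t using ct_ind'; intros Ht.
  1-5: simpl in *; tauto.
  - change (ct_ok (CExt (map (fun p => (fst p, ct_subst x u (snd p))) bs))).
    rewrite ct_ok_iff_ext in *. destruct Ht as [A [B C]]. rewrite map_fst_pair.
    split; [apply map_nonnil; auto|split; auto].
    apply Forall_map. rewrite Forall_forall in *. intros p Hp; simpl. apply H; auto.
  - change (ct_ok (CInt (map (fun p => (fst p, ct_subst x u (snd p))) bs))).
    rewrite ct_ok_iff_int in *. destruct Ht as [A [B C]]. rewrite map_fst_pair.
    split; [apply map_nonnil; auto|split; auto].
    apply Forall_map. rewrite Forall_forall in *. intros p Hp; simpl. apply H; auto.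
  - simpl in *. destruct Ht as [A B]. destruct (Nat.eqb_spec x x0); simpl; auto.
    split; auto. intros C. apply A. eapply ct_ug_subst; eauto.
  - simpl. destruct (Nat.eqb_spec x x0); simpl; auto.
Qed.

Definition SCt := @SC BT.

Lemma SC_unfold x (s : ct BT) : SC (CMu x s) -> SC (ct_subst x (CMu x s) s).
Proof.
  intros [Hf Ho]. split.
  - apply nil_iff. intros z Hz. apply ct_fv_subst in Hz as [[A B]|A].
    + assert (In z (ct_fv (CMu x s))) by (simpl; apply in_in_remove; auto).
      rewrite Hf in H; auto.
    + rewrite Hf in A; auto.
  - apply ct_ok_subst; auto. apply Ho.
Qed.

Fixpoint ct_depth (t : ct BT) : nat := match t with CMu _ s => S (ct_depth s) | _ => 0 end.
Fixpoint ct_unf_n (n : nat) (t : ct BT) : ct BT :=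
  match n with
  | 0 => t
  | S n => match t with CMu x s => ct_unf_n n (ct_subst x (CMu x s) s) | _ => t end
  end.
Definition hnf (t : ct BT) := ct_unf_n (ct_depth t) t.

Lemma depth_subst x (u s : ct BT) : ~ ct_ug x s -> ct_depth (ct_subst x u s) = ct_depth s.
Proof.
  induction s; simpl; intros H; auto.
  - destruct (Nat.eqb_spec x x0); simpl; auto. f_equal. apply IHs. intros C; apply H; auto.
  - destruct (Nat.eqb_spec x x0); simpl; auto. exfalso; auto.
Qed.

Lemma hnf_mu x (s : ct BT) : ct_ok (CMu x s) -> hnf (CMu x s) = hnf (ct_subst x (CMu x s) s).
Proof.
  intros [H _]. unfold hnf. simpl. rewrite depth_subst; auto.
Qed.

Inductive mus : ct BT -> ct BT -> Prop :=
| mus_refl s : mus s s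
| mus_step x b t : mus (ct_subst x (CMu x b) b) t -> mus (CMu x b) t.

Definition notmu (t : ct BT) := forall x b, t <> CMu x b.

Lemma hnf_props_n n : forall t : ct BT, ct_depth t = n -> SC t ->
  SC (hnf t) /\ mus t (hnf t) /\ notmu (hnf t) /\ (forall y, hnf t <> CVar y).
Proof.
  induction n; intros t Hd Hs.
  - destruct t; simpl in Hd; try discriminate; unfold hnf; simpl;
      (split; [auto|split; [constructor|split; [intros ? ? ?; discriminate|]]]);
      try (intros ? ?; discriminate).
    intros y _. destruct Hs as [Hf _]. simpl in Hf. discriminate.
  - destruct t; simpl in Hd; try discriminate. injection Hd as Hd.
    rewrite hnf_mu by apply Hs.
    assert (Hs' := SC_unfold Hs).
    assert (Hd' : ct_depth (ct_subst x (CMu x t) t) = n).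
    { rewrite depth_subst; auto. apply Hs. }
    destruct (IHn _ Hd' Hs') as [A [B [C D]]]. split; [|split; [|split]]; auto.
    constructor; auto.
Qed.

Lemma hnf_props (t : ct BT) : SC t ->
  SC (hnf t) /\ mus t (hnf t) /\ notmu (hnf t) /\ (forall y, hnf t <> CVar y).
Proof. intros; eapply hnf_props_n; eauto. Qed.

Lemma hnf_id (t : ct BT) : notmu t -> hnf t = t.
Proof. destruct t; intros H; try reflexivity. exfalso; eapply H; eauto. Qed.

Lemma mus_SC (s t : ct BT) : mus s t -> SC s -> SC t.
Proof. induction 1; auto. intros Hs; apply IHmus, SC_unfold; auto. Qed.

End Syn.

Section Tr.
Variable BT : Type.

Lemma st_ok_iff_bra (bs : list (label * st BT)) :
  st_ok (TBra bs) <-> bs <> [] /\ NoDup (map fst bs) /\ Forall (fun p => st_ok (snd p)) bs.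
Proof. simpl. rewrite (@fold_Forall _ (fun p => st_ok (snd p))). tauto. Qed.
Lemma st_ok_iff_sel (bs : list (label * st BT)) :
  st_ok (TSel bs) <-> bs <> [] /\ NoDup (map fst bs) /\ Forall (fun p => st_ok (snd p)) bs.
Proof. simpl. rewrite (@fold_Forall _ (fun p => st_ok (snd p))). tauto. Qed.

Lemma trM_subst x (u t : st BT) : trM (st_subst x u t) = ct_subst x (trM u) (trM t).
Proof.
  induction t using st_ind'; simpl; try congruence.
  - f_equal. rewrite !map_map. apply map_ext_Forall. eapply Forall_impl; [|exact H].
    intros p Hp; simpl. rewrite Hp; reflexivity.
  - f_equal. rewrite !map_map. apply map_ext_Forall. eapply Forall_impl; [|exact H].
    intros p Hp; simpl. rewrite Hp; reflexivity.
  - destruct (Nat.eqb x x0); simpl; congruence.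
  - destruct (Nat.eqb x x0); simpl; congruence.
Qed.

Lemma flat_map_map_eq (A B C : Type) (f : A -> B) (g : B -> list C) (h : A -> list C) l :
  Forall (fun a => g (f a) = h a) l -> flat_map g (map f l) = flat_map h l.
Proof. induction 1; simpl; congruence. Qed.

Lemma trM_fv (t : st BT) : ct_fv (trM t) = st_fv t.
Proof.
  induction t using st_ind'; simpl; try congruence.
  all: try (apply flat_map_map_eq; eapply Forall_impl; [|exact H]; intros p Hp; exact Hp).
  all: try (rewrite IHt; reflexivity).
Qed.

Lemma trM_ug x (t : st BT) : ct_ug x (trM t) <-> st_ug x t.
Proof. induction t; simpl; try rewrite IHt; tauto. Qed.

Lemma trM_ok (t : st BT) : ct_ok (trM t) <-> st_ok t.
Proof.
  induction t using st_ind'.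
  1-5: simpl in *; tauto.
  - change (ct_ok (CExt (map (fun p => (fst p, trM (snd p))) bs)) <-> st_ok (TBra bs)).
    rewrite ct_ok_iff_ext, st_ok_iff_bra, map_fst_pair, Forall_map. simpl.
    assert (E : map (fun p => (fst p, trM (snd p))) bs <> [] <-> bs <> [])
      by (destruct bs; simpl; split; congruence).
    rewrite E. split; intros [A [B C]]; split; auto; split; auto;
      rewrite Forall_forall in *; intros p Hp; apply H; auto.
  - change (ct_ok (CInt (map (fun p => (fst p, trM (snd p))) bs)) <-> st_ok (TSel bs)).
    rewrite ct_ok_iff_int, st_ok_iff_sel, map_fst_pair, Forall_map. simpl.
    assert (E : map (fun p => (fst p, trM (snd p))) bs <> [] <-> bs <> [])
      by (destruct bs; simpl; split; congruence).
    rewrite E. split; intros [A [B C]]; split; auto; split; auto;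
      rewrite Forall_forall in *; intros p Hp; apply H; auto.
  - simpl. rewrite IHt, trM_ug. tauto.
  - simpl; tauto.
Qed.

Lemma ST_SC (t : st BT) : ST t <-> SC (trM t).
Proof. unfold ST, SC. rewrite trM_fv, trM_ok. tauto. Qed.

Lemma trM_depth (t : st BT) : ct_depth (trM t) = mu_depth t.
Proof. induction t; simpl; auto. Qed.

Lemma trM_unf_n n : forall t : st BT, trM (st_unfold_n n t) = ct_unf_n n (trM t).
Proof.
  induction n; intros t; simpl; auto.
  destruct t; simpl; auto. rewrite IHn, trM_subst. reflexivity.
Qed.

Lemma trM_unfold (t : st BT) : trM (st_unfold t) = hnf (trM t).
Proof. unfold st_unfold, hnf. rewrite trM_depth. apply trM_unf_n. Qed.

End Tr.

Section Dual.
Variable BT : Type.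
Notation ctb := (ct BT).

Definition upd (g : tvar -> ctb) x v := fun y => if Nat.eqb x y then v else g y.
Definition idg : tvar -> ctb := fun y => CVar y.

Fixpoint psub (g : tvar -> ctb) (t : ctb) : ctb :=
  match t with
  | C1 => C1
  | CInB b s => CInB b (psub g s)
  | COutB b s => COutB b (psub g s)
  | CInC c s => CInC (psub g c) (psub g s)
  | COutC c s => COutC (psub g c) (psub g s)
  | CExt bs => CExt (map (fun p => (fst p, psub g (snd p))) bs)
  | CInt bs => CInt (map (fun p => (fst p, psub g (snd p))) bs)
  | CMu x s => CMu x (psub (upd g x (CVar x)) s)
  | CVar x => g x
  end.

Fixpoint cd (g : tvar -> ctb) (t : ctb) : ctb :=
  match t with
  | C1 => C1
  | CInB b s => COutB b (cd g s)
  | COutB b s => CInB b (cd g s)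
  | CInC c s => COutC (psub g c) (cd g s)
  | COutC c s => CInC (psub g c) (cd g s)
  | CExt bs => CInt (map (fun p => (fst p, cd g (snd p))) bs)
  | CInt bs => CExt (map (fun p => (fst p, cd g (snd p))) bs)
  | CMu x s => CMu x (cd (upd g x (psub g (CMu x s))) s)
  | CVar x => CVar x
  end.

Lemma in_remove_iff y x (l : list tvar) : In y (remove Nat.eq_dec x l) <-> In y l /\ y <> x.
Proof. split; [apply in_remove|intros [A B]; apply in_in_remove; auto]. Qed.

Ltac lists_tac H :=
  f_equal; apply map_ext_in; intros p Hp; rewrite Forall_forall in H;
  destruct p as [l s]; simpl.

Lemma psub_ext (t : ctb) : forall g g', (forall y, In y (ct_fv t) -> g y = g' y) ->
  psub g t = psub g' t.
Proof.
  induction t using ct_ind'; intros g g' E; simpl in *; auto.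
  - f_equal; auto.
  - f_equal; auto.
  - f_equal; [apply IHt1|apply IHt2]; intros; apply E; apply in_app_iff; auto.
  - f_equal; [apply IHt1|apply IHt2]; intros; apply E; apply in_app_iff; auto.
  - lists_tac H. f_equal. apply (H _ Hp). intros y Hy; apply E. apply in_flat_map. exists (l, s); auto.
  - lists_tac H. f_equal. apply (H _ Hp). intros y Hy; apply E. apply in_flat_map. exists (l, s); auto.
  - f_equal. apply IHt. intros y Hy. unfold upd. destruct (Nat.eqb_spec x y); auto.
    apply E. apply in_remove_iff; auto.
Qed.

Lemma psub_id (t : ctb) : psub idg t = t.
Proof.
  induction t using ct_ind'; simpl; try congruence.
  - f_equal. rewrite <- (map_id bs) at 2. apply map_ext_in. intros [l s] Hp.
    rewrite Forall_forall in H. simpl. f_equal. apply (H _ Hp).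
  - f_equal. rewrite <- (map_id bs) at 2. apply map_ext_in. intros [l s] Hp.
    rewrite Forall_forall in H. simpl. f_equal. apply (H _ Hp).
  - f_equal. rewrite <- IHt at 2. apply psub_ext. intros y _. unfold upd, idg.
    destruct (Nat.eqb_spec x y); subst; auto.
  - reflexivity.
Qed.

Lemma psub_closed g (t : ctb) : ct_fv t = [] -> psub g t = t.
Proof.
  intros H. rewrite <- (psub_id t) at 2. apply psub_ext. intros y Hy; rewrite H in Hy; contradiction.
Qed.

Lemma psub_fv (t : ctb) : forall g z, In z (ct_fv (psub g t)) ->
  exists y, In y (ct_fv t) /\ In z (ct_fv (g y)).
Proof.
  induction t using ct_ind'; intros g z Hz; simpl in *; try contradiction.
  - apply (IHt g z Hz).
  - apply (IHt g z Hz).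
  - apply in_app_iff in Hz as [Hz|Hz]; [destruct (IHt1 g z Hz) as [y [A B]]|destruct (IHt2 g z Hz) as [y [A B]]];
      exists y; rewrite in_app_iff; auto.
  - apply in_app_iff in Hz as [Hz|Hz]; [destruct (IHt1 g z Hz) as [y [A B]]|destruct (IHt2 g z Hz) as [y [A B]]];
      exists y; rewrite in_app_iff; auto.
  - apply in_flat_map in Hz as [p [Hp Hz]]. apply in_map_iff in Hp as [q [<- Hq]].
    rewrite Forall_forall in H. destruct (H q Hq g z Hz) as [y [A B]]. exists y; split; auto.
    apply in_flat_map; eauto.
  - apply in_flat_map in Hz as [p [Hp Hz]]. apply in_map_iff in Hp as [q [<- Hq]].
    rewrite Forall_forall in H. destruct (H q Hq g z Hz) as [y [A B]]. exists y; split; auto.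
    apply in_flat_map; eauto.
  - apply in_remove_iff in Hz as [Hz Hne]. destruct (IHt _ _ Hz) as [y [A B]].
    unfold upd in B. destruct (Nat.eqb_spec x y).
    + simpl in B. destruct B as [B|[]]; congruence.
    + exists y; split; auto. apply in_remove_iff; auto.
  - exists x; auto.
Qed.

Lemma psub_subst (t : ctb) : forall g x u, ct_fv u = [] ->
  psub g (ct_subst x u t) = psub (upd g x u) t.
Proof.
  induction t using ct_ind'; intros g y u Hu; simpl; try (f_equal; auto; fail).
  - f_equal. rewrite map_map. apply map_ext_in. intros [l s] Hp.
    rewrite Forall_forall in H. simpl. f_equal. apply (H _ Hp); auto.
  - f_equal. rewrite map_map. apply map_ext_in. intros [l s] Hp.
    rewrite Forall_forall in H. simpl. f_equal. apply (H _ Hp); auto.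
  - destruct (Nat.eqb_spec y x); simpl.
    + subst. f_equal. apply psub_ext. intros z _. unfold upd.
      destruct (Nat.eqb_spec x z); auto.
    + f_equal. rewrite IHt by auto. apply psub_ext. intros z _. unfold upd.
      destruct (Nat.eqb_spec y z); destruct (Nat.eqb_spec x z); subst; auto; congruence.
  - unfold upd. destruct (Nat.eqb_spec y x); simpl; auto.
    apply psub_closed; auto.
Qed.

Definition good (g : tvar -> ctb) := forall y, g y = CVar y \/ SC (g y).

Lemma good_idg : good idg.
Proof. intros y; left; reflexivity. Qed.

Lemma good_upd g x v : good g -> (v = CVar x \/ SC v) -> good (upd g x v).
Proof. intros G V y. unfold upd. destruct (Nat.eqb_spec x y); subst; auto. Qed.

Lemma psub_ug (t : ctb) : forall g y, good g -> ct_ug y (psub g t) -> ct_ug y t.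
Proof.
  induction t; intros g y G H; simpl in *; auto.
  - destruct H as [A B]. split; auto. eapply IHt; [|exact B]. apply good_upd; auto.
  - destruct (G x) as [E|E].
    + rewrite E in H; simpl in H; auto.
    + apply ct_ug_fv in H. destruct E as [E _]. rewrite E in H. contradiction.
Qed.

Lemma psub_ok (t : ctb) : forall g, good g -> ct_ok t -> ct_ok (psub g t).
Proof.
  induction t using ct_ind'; intros g G Ht.
  1-5: simpl in *; intuition.
  - change (ct_ok (CExt (map (fun p => (fst p, psub g (snd p))) bs))).
    rewrite ct_ok_iff_ext in *. destruct Ht as [A [B C]]. rewrite map_fst_pair.
    split; [apply map_nonnil; auto|split; auto].
    apply Forall_map. rewrite Forall_forall in *. intros p Hp; simpl. apply H; auto.
  - change (ct_ok (CInt (map (fun p => (fst p, psub g (snd p))) bs))).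
    rewrite ct_ok_iff_int in *. destruct Ht as [A [B C]]. rewrite map_fst_pair.
    split; [apply map_nonnil; auto|split; auto].
    apply Forall_map. rewrite Forall_forall in *. intros p Hp; simpl. apply H; auto.
  - simpl in *. destruct Ht as [A B]. assert (G' : good (upd g x (CVar x))) by (apply good_upd; auto).
    split; auto. intros C. apply A. eapply psub_ug; eauto.
  - simpl. destruct (G x) as [E|E]; [rewrite E; simpl; auto|apply E].
Qed.

Lemma cd_ext (t : ctb) : forall g g', (forall y, In y (ct_fv t) -> g y = g' y) ->
  cd g t = cd g' t.
Proof.
  induction t using ct_ind'; intros g g' E; simpl in *; auto.
  - f_equal; auto.
  - f_equal; auto.
  - f_equal; [apply psub_ext|apply IHt2]; intros; apply E; apply in_app_iff; auto.
  - f_equal; [apply psub_ext|apply IHt2]; intros; apply E; apply in_app_iff; auto.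
  - lists_tac H. f_equal. apply (H _ Hp). intros y Hy; apply E. apply in_flat_map. exists (l, s); auto.
  - lists_tac H. f_equal. apply (H _ Hp). intros y Hy; apply E. apply in_flat_map. exists (l, s); auto.
  - f_equal. apply IHt. intros y Hy. unfold upd. destruct (Nat.eqb_spec x y); auto.
    + f_equal. apply psub_ext. intros z Hz. unfold upd. destruct (Nat.eqb_spec x z); auto.
      apply E, in_remove_iff; auto.
    + apply E. apply in_remove_iff; auto.
Qed.

Lemma cd_ug (t : ctb) : forall g y, ct_ug y (cd g t) <-> ct_ug y t.
Proof. induction t; intros g y; simpl; try tauto. rewrite IHt; tauto. Qed.

Lemma cd_depth (t : ctb) g : ct_depth (cd g t) = ct_depth t.
Proof. revert g; induction t; intros g; simpl; auto. Qed.

Lemma ct_subst_nofree x v (t : ctb) : ~ In x (ct_fv t) -> ct_subst x v t = t.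
Proof.
  induction t using ct_ind'; intros Hn; simpl in *; auto.
  - f_equal; auto.
  - f_equal; auto.
  - rewrite in_app_iff in Hn. f_equal; auto.
  - rewrite in_app_iff in Hn. f_equal; auto.
  - f_equal. rewrite <- (map_id bs) at 2. apply map_ext_in. intros [l s] Hp.
    rewrite Forall_forall in H. simpl. f_equal. apply (H _ Hp). intros C; apply Hn.
    apply in_flat_map. exists (l, s); auto.
  - f_equal. rewrite <- (map_id bs) at 2. apply map_ext_in. intros [l s] Hp.
    rewrite Forall_forall in H. simpl. f_equal. apply (H _ Hp). intros C; apply Hn.
    apply in_flat_map. exists (l, s); auto.
  - destruct (Nat.eqb_spec x x0); auto. f_equal. apply IHt. intros C; apply Hn.
    apply in_remove_iff; auto.
  - destruct (Nat.eqb_spec x x0); auto. subst. exfalso; auto.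
Qed.

Definition inv x (g : tvar -> ctb) := forall y, y <> x -> ~ In x (ct_fv (g y)).

Lemma inv_idg x : inv x idg.
Proof. intros y Hy C. simpl in C. destruct C; auto. Qed.

Lemma msg_nofree x u g (c : ctb) : ct_fv u = [] -> inv x g ->
  ~ In x (ct_fv (psub (upd g x u) c)).
Proof.
  intros Hu I C. apply psub_fv in C as [y [A B]]. unfold upd in B.
  destruct (Nat.eqb_spec x y).
  - rewrite Hu in B; auto.
  - apply (I y); auto.
Qed.

Lemma cd_subst (t : ctb) : forall g x u, ct_fv u = [] -> inv x g ->
  cd g (ct_subst x u t) = ct_subst x (cd idg u) (cd (upd g x u) t).
Proof.
  induction t using ct_ind'; intros g y u Hu I; simpl.
  - reflexivity.
  - f_equal; auto.
  - f_equal; auto.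
  - f_equal; auto. rewrite psub_subst by auto. symmetry; apply ct_subst_nofree, msg_nofree; auto.
  - f_equal; auto. rewrite psub_subst by auto. symmetry; apply ct_subst_nofree, msg_nofree; auto.
  - f_equal. rewrite !map_map. apply map_ext_in. intros [l s] Hp.
    rewrite Forall_forall in H. simpl. f_equal. apply (H _ Hp); auto.
  - f_equal. rewrite !map_map. apply map_ext_in. intros [l s] Hp.
    rewrite Forall_forall in H. simpl. f_equal. apply (H _ Hp); auto.
  - destruct (Nat.eqb_spec y x).
    + subst. simpl. f_equal. apply cd_ext. intros z _. unfold upd.
      destruct (Nat.eqb x z); auto. f_equal. apply psub_ext. intros w _.
      destruct (Nat.eqb x w); auto.
    + simpl. f_equal. rewrite IHt; auto.
      * assert (P : psub (upd g x (CVar x)) (ct_subst y u t) = psub (upd (upd g y u) x (CVar x)) t).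
        { rewrite psub_subst by auto. apply psub_ext. intros w _. unfold upd.
          destruct (Nat.eqb_spec y w); destruct (Nat.eqb_spec x w); subst; congruence. }
        rewrite P. f_equal. apply cd_ext. intros z _. unfold upd.
        destruct (Nat.eqb_spec y z); destruct (Nat.eqb_spec x z); subst; congruence.
      * intros w Hw. unfold upd at 1. destruct (Nat.eqb_spec x w).
        -- intros C. simpl in C. apply in_remove_iff in C as [C _]. apply psub_fv in C as [v [A B]].
           apply ct_fv_subst in A as [[A1 A2]|A1].
           ++ unfold upd in B. destruct (Nat.eqb_spec x v).
              ** simpl in B. destruct B as [B|[]]; congruence.
              ** apply (I v); auto.
           ++ rewrite Hu in A1; auto.
        -- apply I; auto.
  - unfold upd. destruct (Nat.eqb_spec y x); simpl.
    + subst. try rewrite Nat.eqb_refl. apply cd_ext. intros z Hz; rewrite Hu in Hz; contradiction.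
    + assert (E : Nat.eqb y x = false) by (apply Nat.eqb_neq; auto). try rewrite E. reflexivity.
Qed.

Definition dual (t : ctb) := cd idg t.

Lemma dual_mu x (s : ctb) : dual (CMu x s) = CMu x (cd (upd idg x (CMu x s)) s).
Proof. unfold dual. change (cd idg (CMu x s)) with (CMu x (cd (upd idg x (psub idg (CMu x s))) s)).
  rewrite psub_id. reflexivity. Qed.

Lemma dual_unfold x (s : ctb) : SC (CMu x s) ->
  ct_subst x (dual (CMu x s)) (cd (upd idg x (CMu x s)) s) = dual (ct_subst x (CMu x s) s).
Proof.
  intros [Hf _]. unfold dual. rewrite cd_subst; auto. apply inv_idg.
Qed.

Lemma cd_ok (t : ctb) : forall g, good g -> (forall y, In y (ct_fv t) -> SC (g y)) ->
  ct_ok t -> ct_ok (cd g t) /\ (forall z, In z (ct_fv (cd g t)) -> In z (ct_fv t)).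
Proof.
  assert (MSG : forall g (c : ctb), good g -> (forall y, In y (ct_fv c) -> SC (g y)) -> ct_ok c ->
     ct_ok (psub g c) /\ ct_fv (psub g c) = []).
  { intros g c G C O. split. apply psub_ok; auto. apply nil_iff. intros z Hz.
    apply psub_fv in Hz as [y [A B]]. destruct (C y A) as [D _]. rewrite D in B; auto. }
  induction t using ct_ind'; intros g G C O.
  - simpl; auto.
  - simpl in *. apply IHt; auto.
  - simpl in *. apply IHt; auto.
  - simpl in *. destruct O as [O1 O2].
    destruct (MSG g t1) as [M1 M2]; auto. { intros; apply C, in_app_iff; auto. }
    destruct (IHt2 g) as [A B]; auto. { intros; apply C, in_app_iff; auto. }
    split; auto. intros z Hz. rewrite M2 in Hz. simpl in Hz. apply in_app_iff; auto.
  - simpl in *. destruct O as [O1 O2].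
    destruct (MSG g t1) as [M1 M2]; auto. { intros; apply C, in_app_iff; auto. }
    destruct (IHt2 g) as [A B]; auto. { intros; apply C, in_app_iff; auto. }
    split; auto. intros z Hz. rewrite M2 in Hz. simpl in Hz. apply in_app_iff; auto.
  - change (ct_ok (CInt (map (fun p => (fst p, cd g (snd p))) bs)) /\
      (forall z, In z (flat_map (fun p => ct_fv (snd p)) (map (fun p => (fst p, cd g (snd p))) bs)) ->
        In z (flat_map (fun p => ct_fv (snd p)) bs))).
    rewrite ct_ok_iff_ext in O. rewrite ct_ok_iff_int. destruct O as [A [B D]].
    rewrite Forall_forall in H, D. split; [split; [apply map_nonnil; auto|split]|].
    + rewrite map_fst_pair; auto.
    + apply Forall_forall. intros p Hp. apply in_map_iff in Hp as [q [<- Hq]]. simpl.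
      apply (H q Hq g G); auto. intros y Hy; apply C. simpl. apply in_flat_map; eauto.
    + intros z Hz. apply in_flat_map in Hz as [p [Hp Hz]]. apply in_map_iff in Hp as [q [<- Hq]].
      simpl in Hz. apply in_flat_map. exists q; split; auto.
      apply (H q Hq g G); auto. intros y Hy; apply C. simpl. apply in_flat_map; eauto.
  - change (ct_ok (CExt (map (fun p => (fst p, cd g (snd p))) bs)) /\
      (forall z, In z (flat_map (fun p => ct_fv (snd p)) (map (fun p => (fst p, cd g (snd p))) bs)) ->
        In z (flat_map (fun p => ct_fv (snd p)) bs))).
    rewrite ct_ok_iff_int in O. rewrite ct_ok_iff_ext. destruct O as [A [B D]].
    rewrite Forall_forall in H, D. split; [split; [apply map_nonnil; auto|split]|].
    + rewrite map_fst_pair; auto.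
    + apply Forall_forall. intros p Hp. apply in_map_iff in Hp as [q [<- Hq]]. simpl.
      apply (H q Hq g G); auto. intros y Hy; apply C. simpl. apply in_flat_map; eauto.
    + intros z Hz. apply in_flat_map in Hz as [p [Hp Hz]]. apply in_map_iff in Hp as [q [<- Hq]].
      simpl in Hz. apply in_flat_map. exists q; split; auto.
      apply (H q Hq g G); auto. intros y Hy; apply C. simpl. apply in_flat_map; eauto.
  - simpl in O. destruct O as [O1 O2].
    destruct (MSG g (CMu x t)) as [M1 M2]; auto. { simpl; auto. }
    assert (G' : good (upd g x (psub g (CMu x t)))) by (apply good_upd; auto; right; split; auto).
    assert (C' : forall y, In y (ct_fv t) -> SC (upd g x (psub g (CMu x t)) y)).
    { intros y Hy. unfold upd. destruct (Nat.eqb_spec x y). split; auto. apply C. simpl.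
      apply in_remove_iff; auto. }
    destruct (IHt _ G' C' O2) as [A B].
    change (cd g (CMu x t)) with (CMu x (cd (upd g x (psub g (CMu x t))) t)).
    simpl. split.
    + split; auto. rewrite cd_ug. auto.
    + intros z Hz. apply in_remove_iff in Hz as [Hz Hne]. apply in_remove_iff; auto.
  - simpl. split; auto.
Qed.

Lemma SC_dual (t : ctb) : SC t -> SC (dual t).
Proof.
  intros [Hf Ho]. destruct (@cd_ok t idg good_idg) as [A B]; auto.
  - intros y Hy; rewrite Hf in Hy; contradiction.
  - split; auto. apply nil_iff. intros z Hz. apply B in Hz. rewrite Hf in Hz; auto.
Qed.

Lemma hnf_dual_n n : forall t : ctb, ct_depth t = n -> SC t -> hnf (dual t) = dual (hnf t).
Proof.
  induction n; intros t Hd Hs.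
  - destruct t; simpl in Hd; try discriminate; reflexivity.
  - destruct t as [| | | | | | |x s|]; simpl in Hd; try discriminate. injection Hd as Hd.
    rewrite hnf_mu by apply Hs. rewrite dual_mu, hnf_mu.
    + rewrite <- dual_mu, dual_unfold by auto. apply IHn.
      * rewrite depth_subst; auto. apply Hs.
      * apply SC_unfold; auto.
    + rewrite <- dual_mu. apply SC_dual; auto.
Qed.

Lemma hnf_dual (t : ctb) : SC t -> hnf (dual t) = dual (hnf t).
Proof. intros; eapply hnf_dual_n; eauto. Qed.

End Dual.

Section Basic.
Variable BT : Type.
Notation ctb := (ct BT).

Lemma cstep_C1 a (s : ctb) : ~ cstep C1 a s.
Proof. intros H; inversion H. Qed.
Lemma cstep_var y a (s : ctb) : ~ cstep (CVar y) a s.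
Proof. intros H; inversion H. Qed.
Lemma cstep_inb t x a (s : ctb) : cstep (CInB t x) a s -> a = AInB t /\ s = x.
Proof. intros H; inversion H; auto. Qed.
Lemma cstep_outb t x a (s : ctb) : cstep (COutB t x) a s -> a = AOutB t /\ s = x.
Proof. intros H; inversion H; auto. Qed.
Lemma cstep_inc c x a (s : ctb) : cstep (CInC c x) a s -> a = AInC c /\ s = x.
Proof. intros H; inversion H; auto. Qed.
Lemma cstep_outc c x a (s : ctb) : cstep (COutC c x) a s -> a = AOutC c /\ s = x.
Proof. intros H; inversion H; auto. Qed.
Lemma cstep_mu x b a (s : ctb) : cstep (CMu x b) a s -> a = ATau /\ s = ct_subst x (CMu x b) b.
Proof. intros H; inversion H; auto. Qed.
Lemma cstep_ext bs a (s : ctb) : cstep (CExt bs) a s -> exists l, a = AInL l /\ In (l, s) bs.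
Proof. intros H; inversion H; subst; eauto. Qed.
Lemma cstep_int bs a (s : ctb) : cstep (CInt bs) a s ->
  (exists l, a = AOutL l /\ bs = [(l, s)]) \/
  (a = ATau /\ 1 < length bs /\ exists l x, In (l, x) bs /\ s = CInt [(l, x)]).
Proof. intros H; inversion H; subst; eauto 10. Qed.

Lemma single_of_len (A : Type) (p : A) bs : In p bs -> length bs <= 1 -> bs = [p].
Proof.
  destruct bs as [|a [|b bs]]; simpl; intros H L; try contradiction.
  - destruct H as [->|[]]; auto.
  - exfalso. lia.
Qed.

Lemma map_single (f : label * ctb -> label * ctb) bs p :
  map f bs = [p] -> exists q, bs = [q] /\ f q = p.
Proof. destruct bs as [|q [|r bs]]; simpl; intros H; try discriminate. injection H; eauto. Qed.

Lemma fv_branch (bs : list (label * ctb)) l x :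
  flat_map (fun p => ct_fv (snd p)) bs = [] -> In (l, x) bs -> ct_fv x = [].
Proof.
  intros H Hin. apply nil_iff. intros z Hz. assert (In z (flat_map (fun p => ct_fv (snd p)) bs)).
  { apply in_flat_map. exists (l, x); auto. }
  rewrite H in H0; auto.
Qed.

Lemma SC_ext_branch bs l (x : ctb) : SC (CExt bs) -> In (l, x) bs -> SC x.
Proof.
  intros [F O] Hin. split. eapply fv_branch; eauto.
  apply ct_ok_iff_ext in O as [_ [_ O]]. rewrite Forall_forall in O. apply (O _ Hin).
Qed.
Lemma SC_int_branch bs l (x : ctb) : SC (CInt bs) -> In (l, x) bs -> SC x.
Proof.
  intros [F O] Hin. split. eapply fv_branch; eauto.
  apply ct_ok_iff_int in O as [_ [_ O]]. rewrite Forall_forall in O. apply (O _ Hin).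
Qed.
Lemma SC_int_single l (x : ctb) : SC x -> SC (CInt [(l, x)]).
Proof.
  intros [F O]. split; simpl. rewrite F; auto. split; [congruence|split; auto].
  constructor; auto. constructor.
Qed.
Lemma SC_ext_single l (x : ctb) : SC x -> SC (CExt [(l, x)]).
Proof.
  intros [F O]. split; simpl. rewrite F; auto. split; [congruence|split; auto].
  constructor; auto. constructor.
Qed.
Lemma nodup_ext (bs : list (label * ctb)) : SC (CExt bs) -> NoDup (map fst bs).
Proof. intros [_ O]. apply ct_ok_iff_ext in O; tauto. Qed.
Lemma nodup_int (bs : list (label * ctb)) : SC (CInt bs) -> NoDup (map fst bs).
Proof. intros [_ O]. apply ct_ok_iff_int in O; tauto. Qed.
Lemma nonnil_int (bs : list (label * ctb)) : SC (CInt bs) -> bs <> [].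
Proof. intros [_ O]. apply ct_ok_iff_int in O; tauto. Qed.
Lemma nonnil_ext (bs : list (label * ctb)) : SC (CExt bs) -> bs <> [].
Proof. intros [_ O]. apply ct_ok_iff_ext in O; tauto. Qed.

Lemma SC_pre1 (c x : ctb) : SC (CInC c x) -> SC c /\ SC x.
Proof. intros [F [O1 O2]]. simpl in F. apply app_eq_nil in F as [F1 F2]. split; split; auto. Qed.
Lemma SC_pre2 (c x : ctb) : SC (COutC c x) -> SC c /\ SC x.
Proof. intros [F [O1 O2]]. simpl in F. apply app_eq_nil in F as [F1 F2]. split; split; auto. Qed.

Lemma cstep_SC (s : ctb) a s' : SC s -> cstep s a s' -> SC s'.
Proof.
  intros Hs H. destruct H.
  - destruct Hs; split; auto.
  - destruct Hs; split; auto.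
  - apply (SC_pre1 Hs).
  - apply (SC_pre2 Hs).
  - eapply SC_int_branch; eauto. left; reflexivity.
  - apply SC_int_single. eapply SC_int_branch; eauto.
  - eapply SC_ext_branch; eauto.
  - apply SC_unfold; auto.
Qed.

Definition NoTau (s : ctb) := forall s', ~ cstep s ATau s'.

Lemma notau_vis (r : ctb) a r' : cstep r a r' -> a <> ATau -> NoTau r.
Proof.
  intros H Ha s' H'. destruct H; inversion H'; subst; try congruence.
  simpl in H0. apply Nat.lt_irrefl in H0; auto.
Qed.

End Basic.

Section Comp.
Variable BT : Type.
Notation ctb := (ct BT).
Variable leb : BT -> BT -> Prop.
Variable B : ctb -> ctb -> Prop.
Notation comp := (compliant leb B).
Notation ps := (pstep leb B).

Lemma comp_inv (r s : ctb) : comp r s -> SC r /\ SC s /\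
  ((~ exists a' b', ps r s a' b') -> ticks r /\ ticks s) /\
  (forall a' b', ps r s a' b' -> comp a' b').
Proof.
  intros [R [HR Hr]]. destruct (HR _ _ Hr) as [A [C [D E]]].
  split; [auto|split; [auto|split; [auto|]]]. intros a' b' P. exists R; split; auto.
Qed.

Lemma comp_coind (R : ctb -> ctb -> Prop) :
  (forall a b, R a b -> SC a /\ SC b /\
    ((~ exists a' b', ps a b a' b') -> ticks a /\ ticks b) /\
    (forall a' b', ps a b a' b' -> R a' b' \/ comp a' b')) ->
  forall a b, R a b -> comp a b.
Proof.
  intros H a b Hab. exists (fun x y => R x y \/ comp x y). split; auto.
  intros x y [Hxy|Hxy].
  - destruct (H _ _ Hxy) as [A [C [D E]]]. auto.
  - destruct (comp_inv Hxy) as [A [C [D E]]]. split; [auto|split; [auto|split; [auto|]]].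
    intros; right; auto.
Qed.

Lemma comp_intro (r s : ctb) : SC r -> SC s -> (exists a' b', ps r s a' b') ->
  (forall a' b', ps r s a' b' -> comp a' b') -> comp r s.
Proof.
  intros A C D E. apply comp_coind with (R := fun x y => x = r /\ y = s); auto.
  intros x y [-> ->]. split; [auto|split; [auto|split]].
  - intros N; exfalso; auto.
  - intros; right; auto.
Qed.

Lemma comp_tau_r (r s s' : ctb) : comp r s -> cstep s ATau s' -> comp r s'.
Proof. intros H T. apply (comp_inv H). apply ps_r; auto. Qed.
Lemma comp_tau_l (r s r' : ctb) : comp r s -> cstep r ATau r' -> comp r' s.
Proof. intros H T. apply (comp_inv H). apply ps_l; auto. Qed.

Lemma comp_mus_r (r s s' : ctb) : comp r s -> mus s s' -> comp r s'.
Proof. intros H M. induction M; auto. apply IHM. eapply comp_tau_r; eauto. constructor. Qed.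

Lemma comp_mus_back (r s s' : ctb) : comp r s' -> mus s s' -> SC s -> comp r s.
Proof.
  intros H M S.
  apply comp_coind with (R := fun x y => SC x /\ SC y /\ exists z, mus y z /\ comp x z).
  2: { split; [apply (comp_inv H)|split; auto]. eauto. }
  clear. intros x y [Sx [Sy [z [M C]]]]. destruct M as [y|v b z M].
  - destruct (comp_inv C) as [A [D [E F]]]. split; [auto|split; [auto|split; [auto|]]].
    intros; right; auto.
  - split; [auto|split; [auto|split]].
    + intros N; exfalso; apply N. exists x, (ct_subst v (CMu v b) b). apply ps_r. constructor.
    + intros a' b' P. inversion P; subst.
      * left. split; [apply (comp_inv (comp_tau_l C H))|]. split; auto.
        exists z; split; [constructor; auto|eapply comp_tau_l; eauto].
      * apply cstep_mu in H as [_ ->]. left. split; auto. split; [apply SC_unfold; auto|]. eauto.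
      * apply cstep_mu in H0 as [-> _]. destruct a1; simpl in H1; contradiction.
Qed.

Lemma comp_stuck (r s : ctb) : comp r s -> NoTau r -> NoTau s ->
  (forall a1 a2 r' s', cstep r a1 r' -> cstep s a2 s' -> ~ bowtie leb B a1 a2) ->
  r = C1 /\ s = C1.
Proof.
  intros H Nr Ns Nb. destruct (comp_inv H) as [_ [_ [D _]]]. apply D.
  intros [a' [b' P]]. inversion P; subst.
  - eapply Nr; eauto.
  - eapply Ns; eauto.
  - eapply Nb; eauto.
Qed.

Lemma comp_sync (r s : ctb) : comp r s -> NoTau r -> NoTau s -> ~ (r = C1 /\ s = C1) ->
  exists a1 a2 r' s', cstep r a1 r' /\ cstep s a2 s' /\ bowtie leb B a1 a2 /\ comp r' s'.
Proof.
  intros H Nr Ns N. apply NNPP. intros Hn. apply N. apply comp_stuck; auto.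
  intros a1 a2 r' s' H1 H2 Hb. apply Hn. exists a1, a2, r', s'. split; [auto|split; [auto|split; auto]].
  apply (comp_inv H). eapply ps_sync; eauto.
Qed.

Lemma comp_commit (r : ctb) bs l x : comp r (CInt bs) -> In (l, x) bs -> comp r (CInt [(l, x)]).
Proof.
  intros H Hin. destruct (Nat.le_gt_cases (length bs) 1) as [L|L].
  - rewrite <- (@single_of_len _ _ _ Hin L). auto.
  - eapply comp_tau_r; eauto. constructor; auto.
Qed.

Lemma comp_C1C1 : comp C1 C1.
Proof.
  apply comp_coind with (R := fun x y => x = C1 /\ y = C1); auto.
  intros x y [-> ->]. split; [split; simpl; auto|split; [split; simpl; auto|split]].
  - intros; split; reflexivity.
  - intros a' b' P. inversion P; subst; exfalso; eapply cstep_C1; eauto.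
Qed.

End Comp.

Lemma comp_mono BT leb (B B' : ct BT -> ct BT -> Prop) : (forall a b, B a b -> B' a b) ->
  forall r s, compliant leb B r s -> compliant leb B' r s.
Proof.
  intros HB. apply comp_coind. intros a b H. destruct (comp_inv H) as [Sa [Sb [St Ss]]].
  split; [auto|split; [auto|split]].
  - intros N. apply St. intros [a' [b' P]]. apply N. exists a', b'.
    destruct P as [? ? ? T|? ? ? T|? ? ? ? a1 a2 T1 T2 Hb].
    + apply ps_l; auto.
    + apply ps_r; auto.
    + eapply ps_sync; eauto. destruct a1, a2; simpl in *; auto.
  - intros a' b' P. left. destruct P as [? ? ? T|? ? ? T|? ? ? ? a1 a2 T1 T2 Hbt].
    + apply Ss. apply ps_l; auto.
    + apply Ss. apply ps_r; auto.
    + destruct (classic (bowtie leb B a1 a2)) as [Hb|Hb].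
      * apply Ss; eapply ps_sync; eauto.
      * exfalso. destruct a1, a2; simpl in Hbt, Hb; try contradiction.
        -- inversion T1; subst. inversion T2; subst.
           destruct (comp_stuck H) as [E _]; try discriminate.
           ++ intros z Z; inversion Z.
           ++ intros z Z; inversion Z.
           ++ intros e1 e2 q1 q2 U1 U2. inversion U1; inversion U2; subst; simpl; auto.
        -- inversion T1; subst. inversion T2; subst.
           destruct (comp_stuck H) as [E _]; try discriminate.
           ++ intros z Z; inversion Z.
           ++ intros z Z; inversion Z.
           ++ intros e1 e2 q1 q2 U1 U2. inversion U1; inversion U2; subst; simpl; auto.
Qed.

Section DualComp.
Variable BT : Type.
Notation ctb := (ct BT).
Variable leb : BT -> BT -> Prop.
Variable B : ctb -> ctb -> Prop.
Hypothesis Hl : forall t, leb t t.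
Hypothesis HB : forall c, SC c -> B c c.
Notation comp := (compliant leb B).
Notation ps := (pstep leb B).

Definition Match (h1 h2 : ctb) : Prop :=
  h1 = h2 \/
  (exists bs l x, h1 = CInt bs /\ h2 = CInt [(l, x)] /\ In (l, x) bs) \/
  (exists bs l x, h1 = CExt [(l, x)] /\ h2 = CExt bs /\ In (l, x) bs).

Lemma mu_dec (t : ctb) : (exists x b, t = CMu x b) \/ notmu t.
Proof. destruct t; try (right; intros ? ? ?; discriminate). left; eauto. Qed.

Lemma SC_notvar y : ~ SC (@CVar BT y).
Proof. intros [F _]. discriminate. Qed.

Lemma dual_progress (a s : ctb) : SC a -> SC s -> Match (hnf a) (hnf s) ->
  (exists r' s', ps (dual a) s r' s') \/ (dual a = C1 /\ s = C1).
Proof.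
  intros Sa Ss M.
  destruct (mu_dec a) as [[x [b ->]]|Na].
  { left. do 2 eexists. apply ps_l. rewrite dual_mu. constructor. }
  destruct (mu_dec s) as [[y [c ->]]|Ns].
  { left. do 2 eexists. apply ps_r. constructor. }
  rewrite (hnf_id Na), (hnf_id Ns) in M.
  destruct M as [<-|[[bs [l [x [-> [-> Hin]]]]]|[bs [l [x [-> [-> Hin]]]]]]].
  - destruct a as [|t x|t x|c x|c x|bs|bs|x b|y].
    + right; auto.
    + left. do 2 eexists. eapply ps_sync. unfold dual; simpl. apply cs_outb. apply cs_inb. simpl; apply Hl.
    + left. do 2 eexists. eapply ps_sync. unfold dual; simpl. apply cs_inb. apply cs_outb. simpl; apply Hl.
    + left. do 2 eexists. eapply ps_sync. unfold dual; simpl. rewrite psub_id. apply cs_outc. apply cs_inc.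
      simpl; apply HB. apply (SC_pre1 Sa).
    + left. do 2 eexists. eapply ps_sync. unfold dual; simpl. rewrite psub_id. apply cs_inc. apply cs_outc.
      simpl; apply HB. apply (SC_pre2 Sa).
    + destruct bs as [|[l x] bs0]; [exfalso; apply (nonnil_ext Sa); auto|]. left. destruct bs0 as [|q bs0].
      * do 2 eexists. eapply ps_sync. unfold dual; simpl. apply cs_outl. apply cs_ext. left; reflexivity.
        simpl; auto.
      * do 2 eexists. apply ps_l. unfold dual; simpl. apply cs_int with (l := l) (s := cd (@idg BT) x).
        simpl; lia. left; reflexivity.
    + destruct bs as [|[l x] bs0]; [exfalso; apply (nonnil_int Sa); auto|]. left. destruct bs0 as [|q bs0].
      * do 2 eexists. eapply ps_sync. unfold dual; simpl. apply cs_ext. left; reflexivity. apply cs_outl.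
        simpl; auto.
      * do 2 eexists. apply ps_r. apply cs_int with (l := l) (s := x). simpl; lia. left; reflexivity.
    + exfalso; eapply Na; eauto.
    + exfalso; eapply SC_notvar; eauto.
  - left. do 2 eexists. eapply ps_sync. unfold dual; simpl. apply cs_ext.
    apply in_map_iff. exists (l, x); split; [reflexivity|exact Hin]. apply cs_outl. simpl; auto.
  - left. do 2 eexists. eapply ps_sync. unfold dual; simpl. apply cs_outl. apply cs_ext. exact Hin.
    simpl; auto.
Qed.

Lemma tau_shape (s : ctb) s' : cstep s ATau s' -> (exists x b, s = CMu x b) \/
  (exists bs l x, s = CInt bs /\ 1 < length bs /\ In (l, x) bs /\ s' = CInt [(l, x)]).
Proof. intros H; inversion H; subst; eauto 10. Qed.

Lemma notmu_dual (a : ctb) : notmu a -> notmu (dual a).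
Proof. destruct a; intros N y c E; unfold dual in E; simpl in E; try discriminate. eapply N; eauto. Qed.

Lemma comp_dual (s0 : ctb) : SC s0 -> comp (dual s0) s0.
Proof.
  intros Ss0.
  apply comp_coind with (R := fun r s => exists a, r = dual a /\ SC a /\ SC s /\ Match (hnf a) (hnf s)).
  2: { exists s0. split; auto. split; auto. split; auto. left; reflexivity. }
  clear Ss0. intros r s [a [-> [Sa [Ss M]]]].
  split; [apply SC_dual; auto|split; [auto|split]].
  { intros N. destruct (dual_progress Sa Ss M) as [P|[E1 E2]]; [exfalso; auto|split; auto]. }
  intros r' s' P. left. inversion P as [? ? ? T|? ? ? T|? ? ? ? a1 a2 T1 T2 Hb]; subst.
  - destruct (mu_dec a) as [[x [b ->]]|Na].
    + rewrite dual_mu in T. apply cstep_mu in T as [_ ->]. exists (ct_subst x (CMu x b) b).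
      split; [rewrite <- dual_mu; apply dual_unfold; auto|].
      split; [apply SC_unfold; auto|split; auto]. rewrite <- hnf_mu; auto. apply Sa.
    + rewrite (hnf_id Na) in M. destruct (tau_shape T) as [[x [b E]]|[bs' [l [x' [E [L [Hin ->]]]]]]].
      * exfalso. eapply (notmu_dual Na); eauto.
      * destruct a as [| | | | |bs| | |]; unfold dual in E; simpl in E; try discriminate.
        injection E as E. subst bs'. apply in_map_iff in Hin as [[l0 x0] [Eq Hin]].
        simpl in Eq. injection Eq as E1 E2. subst. exists (CExt [(l, x0)]).
        split; [reflexivity|]. split; [apply SC_ext_single; eapply SC_ext_branch; eauto|split; auto].
        rewrite hnf_id by (intros ? ? ?; discriminate). right; right.
        destruct M as [E|[[bs1 [l1 [x1 [E1 [E2 _]]]]]|[bs1 [l1 [x1 [E1 [E2 _]]]]]]].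
        -- exists bs, l, x0. split; auto.
        -- discriminate.
        -- injection E1 as ->. simpl in L. lia.
  - destruct (mu_dec s) as [[x [b ->]]|Ns].
    + apply cstep_mu in T as [_ ->]. exists a. split; auto. split; auto. split; [apply SC_unfold; auto|].
      rewrite <- hnf_mu; auto. apply Ss.
    + rewrite (hnf_id Ns) in M. destruct (tau_shape T) as [[x [b E]]|[bs [l [x [-> [L [Hin ->]]]]]]].
      * exfalso; eapply Ns; eauto.
      * exists a. split; auto. split; auto. split; [eapply cstep_SC; eauto|].
        rewrite (hnf_id (t := CInt [(l, x)])) by (intros ? ? ?; discriminate).
        destruct M as [E|[[bs1 [l1 [x1 [E1 [E2 _]]]]]|[bs1 [l1 [x1 [E1 [E2 _]]]]]]].
        -- right; left. exists bs, l, x. auto.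
        -- injection E2 as ->. simpl in L. lia.
        -- discriminate.
  - assert (A1 : a1 <> ATau) by (intros ->; destruct a2; simpl in Hb; auto).
    assert (A2 : a2 <> ATau) by (intros ->; destruct a1; simpl in Hb; auto).
    destruct (mu_dec a) as [[x [b ->]]|Na].
    { rewrite dual_mu in T1. apply cstep_mu in T1 as [-> _]. congruence. }
    destruct (mu_dec s) as [[x [b ->]]|Ns].
    { apply cstep_mu in T2 as [-> _]. congruence. }
    rewrite (hnf_id Na), (hnf_id Ns) in M.
    destruct M as [<-|[[bs [l [x [-> [-> Hin]]]]]|[bs [l [x [-> [-> Hin]]]]]]].
    + destruct a as [|t x|t x|c x|c x|bs|bs|x b|y]; unfold dual in T1; simpl in T1.
      * exfalso; eapply cstep_C1; eauto.
      * apply cstep_outb in T1 as [_ ->]. apply cstep_inb in T2 as [_ ->].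
        exists x. split; [reflexivity|]. split; [apply Sa|split; [apply Sa|left; reflexivity]].
      * apply cstep_inb in T1 as [_ ->]. apply cstep_outb in T2 as [_ ->].
        exists x. split; [reflexivity|]. split; [apply Sa|split; [apply Sa|left; reflexivity]].
      * apply cstep_outc in T1 as [_ ->]. apply cstep_inc in T2 as [_ ->].
        exists x. split; [reflexivity|]. split; [apply (SC_pre1 Sa)|split; [apply (SC_pre1 Sa)|left; reflexivity]].
      * apply cstep_inc in T1 as [_ ->]. apply cstep_outc in T2 as [_ ->].
        exists x. split; [reflexivity|]. split; [apply (SC_pre2 Sa)|split; [apply (SC_pre2 Sa)|left; reflexivity]].
      * apply cstep_int in T1 as [[l [-> E]]|[-> _]]; [|congruence].
        apply map_single in E as [[l0 x0] [-> E]]. simpl in E. injection E as E1 E2. subst.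
        apply cstep_ext in T2 as [l1 [-> [E|[]]]]. injection E as E1 E2. subst.
        eexists. split; [reflexivity|]. split; [eapply SC_ext_branch; eauto; left; reflexivity|].
        split; [eapply SC_ext_branch; eauto; left; reflexivity|left; reflexivity].
      * apply cstep_int in T2 as [[l [-> ->]]|[-> _]]; [|congruence].
        apply cstep_ext in T1 as [l1 [-> [E|[]]]]. simpl in E. injection E as E1 E2. subst.
        eexists. split; [reflexivity|]. split; [eapply SC_int_branch; eauto; left; reflexivity|].
        split; [eapply SC_int_branch; eauto; left; reflexivity|left; reflexivity].
      * exfalso; eapply Na; eauto.
      * exfalso; eapply cstep_var; eauto.
    + apply cstep_int in T2 as [[l0 [-> E]]|[-> _]]; [|congruence]. injection E as -> ->.
      unfold dual in T1; simpl in T1. apply cstep_ext in T1 as [l1 [-> Hin1]].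
      simpl in Hb. subst l1. apply in_map_iff in Hin1 as [[l2 x2] [Eq Hin2]]. simpl in Eq.
      injection Eq as E1 E2. subst. assert (x2 = s') by (eapply nodup_uniq; eauto; apply nodup_int; auto).
      subst x2. exists s'. split; [reflexivity|]. split; [|split; [|left; reflexivity]]; eapply SC_int_branch; eauto.
      all: left; reflexivity.
    + unfold dual in T1; simpl in T1. apply cstep_int in T1 as [[l0 [-> E]]|[-> _]]; [|congruence].
      injection E as E1 E2. subst. apply cstep_ext in T2 as [l1 [-> Hin1]]. simpl in Hb. subst.
      assert (x = s') by (eapply nodup_uniq; eauto; apply nodup_ext; auto). subst x.
      exists s'. split; [reflexivity|]. split; [|split; [|left; reflexivity]]; eapply SC_ext_branch; eauto.
      all: try (left; reflexivity).
Qed.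

End DualComp.

Definition CF BT (leb : BT -> BT -> Prop) (Q : ct BT -> ct BT -> Prop) (h1 h2 : ct BT) : Prop :=
  match h1 with
  | C1 => h2 = C1
  | CInB t1 x => exists t2 z, h2 = CInB t2 z /\ Q x z /\ leb t1 t2
  | COutB t1 x => exists t2 z, h2 = COutB t2 z /\ Q x z /\ leb t2 t1
  | CInC c1 x => exists c2 z, h2 = CInC c2 z /\ Q x z /\ Q c1 c2
  | COutC c1 x => exists c2 z, h2 = COutC c2 z /\ Q x z /\ Q c2 c1
  | CExt bs => exists bs', h2 = CExt bs' /\
      forall l x, In (l, x) bs -> exists y, In (l, y) bs' /\ Q x y
  | CInt bs => exists bs', h2 = CInt bs' /\
      forall l y, In (l, y) bs' -> exists x, In (l, x) bs /\ Q x y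
  | _ => False
  end.

Section Acts.
Variable BT : Type.
Notation ctb := (ct BT).
Lemma act_outb (r : ctb) t r' : cstep r (AOutB t) r' -> r = COutB t r'.
Proof. intros H; inversion H; auto. Qed.
Lemma act_inb (r : ctb) t r' : cstep r (AInB t) r' -> r = CInB t r'.
Proof. intros H; inversion H; auto. Qed.
Lemma act_outc (r : ctb) t r' : cstep r (AOutC t) r' -> r = COutC t r'.
Proof. intros H; inversion H; auto. Qed.
Lemma act_inc (r : ctb) t r' : cstep r (AInC t) r' -> r = CInC t r'.
Proof. intros H; inversion H; auto. Qed.
Lemma act_outl (r : ctb) l r' : cstep r (AOutL l) r' -> r = CInt [(l, r')].
Proof. intros H; inversion H; auto. Qed.
Lemma act_inl (r : ctb) l r' : cstep r (AInL l) r' -> exists bs, r = CExt bs /\ In (l, r') bs.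
Proof. intros H; inversion H; eauto. Qed.

Lemma notau_single l (x : ctb) : NoTau (CInt [(l, x)]).
Proof. intros z Z. apply cstep_int in Z as [[? [E _]]|[_ [L _]]]; [discriminate|simpl in L; lia]. Qed.
Lemma notau_ext (bs : list (label * ctb)) : NoTau (CExt bs).
Proof. intros z Z. apply cstep_ext in Z as [? [E _]]; discriminate. Qed.
Lemma notau_C1 : NoTau (@C1 BT).
Proof. intros z Z. inversion Z. Qed.

Lemma det_single l (x : ctb) a y : cstep (CInt [(l, x)]) a y -> a = AOutL l /\ y = x.
Proof.
  intros Z. apply cstep_int in Z as [[l0 [-> E]]|[_ [L _]]]; [|simpl in L; lia].
  injection E as -> ->. auto.
Qed.
End Acts.

Ltac cft := intros H; repeat match goal with H: exists _, _ |- _ => destruct H | H: _ /\ _ |- _ => destruct H end;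
  try contradiction; try discriminate; try (match goal with E: ?A = ?B |- _ => injection E; clear E; intros; subst end); eauto 10.

Section CFlem.
Variable BT : Type.
Variable leb : BT -> BT -> Prop.
Variable Q : ct BT -> ct BT -> Prop.
Lemma CF_C1 h : CF leb Q h C1 -> h = C1.
Proof. destruct h; simpl; cft. Qed.
Lemma CF_inb h t2 z : CF leb Q h (CInB t2 z) -> exists t1 x, h = CInB t1 x /\ Q x z /\ leb t1 t2.
Proof. destruct h; simpl; cft. Qed.
Lemma CF_outb h t2 z : CF leb Q h (COutB t2 z) -> exists t1 x, h = COutB t1 x /\ Q x z /\ leb t2 t1.
Proof. destruct h; simpl; cft. Qed.
Lemma CF_inc h c2 z : CF leb Q h (CInC c2 z) -> exists c1 x, h = CInC c1 x /\ Q x z /\ Q c1 c2.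
Proof. destruct h; simpl; cft. Qed.
Lemma CF_outc h c2 z : CF leb Q h (COutC c2 z) -> exists c1 x, h = COutC c1 x /\ Q x z /\ Q c2 c1.
Proof. destruct h; simpl; cft. Qed.
Lemma CF_ext h bs' : CF leb Q h (CExt bs') -> exists bs, h = CExt bs /\
  forall l x, In (l, x) bs -> exists y, In (l, y) bs' /\ Q x y.
Proof. destruct h; simpl; cft. Qed.
Lemma CF_int h bs' : CF leb Q h (CInt bs') -> exists bs, h = CInt bs /\
  forall l y, In (l, y) bs' -> exists x, In (l, x) bs /\ Q x y.
Proof. destruct h; simpl; cft. Qed.
End CFlem.

Section Transfer.
Variable BT : Type.
Notation ctb := (ct BT).
Variable leb : BT -> BT -> Prop.
Variable B : ctb -> ctb -> Prop.
Variable Q : ctb -> ctb -> Prop.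
Hypothesis Hlt : forall a b c, leb a b -> leb b c -> leb a c.
Hypothesis HBt : forall a b c, B a b -> B b c -> B a c.
Hypothesis HQ : forall s t, Q s t -> SC s /\ SC t /\ CF leb Q (hnf s) (hnf t).
Hypothesis HQmu : forall s x b, Q s (CMu x b) -> Q s (ct_subst x (CMu x b) b).
Hypothesis HBQ : forall a b, Q a b -> B a b.
Notation comp := (compliant leb B).
Notation ps := (pstep leb B).

Definition Sel (s t : ctb) := exists l x y, s = CInt [(l, x)] /\ t = CInt [(l, y)] /\ Q x y.

Lemma QQ_CF s t : SC s -> (Q s t \/ Sel s t) -> CF leb Q (hnf s) (hnf t).
Proof.
  intros Ss [H|[l [x [y [-> [-> H]]]]]].
  - apply HQ; auto.
  - rewrite !hnf_id by (intros ? ? ?; discriminate). simpl. exists [(l, y)]. split; [reflexivity|].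
    intros l0 y0 [E|[]]. injection E as -> ->. exists x. simpl; auto.
Qed.

Lemma comp_prefix (r h : ctb) a r' x : comp r h -> NoTau h -> h <> C1 -> cstep r a r' -> a <> ATau ->
  (forall a' r'', cstep r a' r'' -> r'' = r') -> (forall a' x', cstep h a' x' -> x' = x) -> comp r' x.
Proof.
  intros C Nh Nc T Na Dr Dh. destruct (comp_sync C (notau_vis T Na) Nh) as [a1 [a2 [r1 [x1 [T1 [T2 [_ C1]]]]]]].
  { intros [_ E]; auto. }
  rewrite (Dr _ _ T1) in C1. rewrite (Dh _ _ T2) in C1. auto.
Qed.

Lemma transfer r s t : Q s t -> comp r s -> comp r t.
Proof.
  intros Hq Hc.
  apply comp_coind with (R := fun r t => SC r /\ SC t /\ exists s, SC s /\ comp r s /\ (Q s t \/ Sel s t)).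
  2: { split; [apply (comp_inv Hc)|split; [apply (HQ Hq)|]]. exists s. split; [apply (HQ Hq)|auto]. }
  clear r s t Hq Hc. intros r t [Sr [St [s [Ss [C QQst]]]]].
  assert (CFh := QQ_CF Ss QQst).
  destruct (hnf_props Ss) as [Sh [Mh [Nmh Nvh]]].
  assert (Ch : comp r (hnf s)) by (eapply comp_mus_r; eauto).
  split; [auto|split; [auto|split]].
  -
    intros N.
    assert (Nr : NoTau r) by (intros r' T; apply N; exists r', t; apply ps_l; auto).
    assert (Nt : NoTau t) by (intros t' T; apply N; exists r, t'; apply ps_r; auto).
    destruct (mu_dec t) as [[x [b ->]]|Nmt]; [exfalso; eapply Nt; constructor|].
    rewrite (hnf_id Nmt) in CFh.
    remember (hnf s) as h eqn:Eh. clear Eh.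
    destruct h as [|t1 x|t1 x|c1 x|c1 x|bs|bs|x b|y]; simpl in CFh.
    + subst t. destruct (comp_stuck Ch Nr (@notau_C1 BT)) as [-> _].
      * intros a1 a2 r' s' _ T2. inversion T2.
      * split; reflexivity.
    + destruct CFh as [t2 [z [-> [_ L]]]].
      destruct (comp_sync Ch Nr) as [a1 [a2 [r' [x' [T1 [T2 [Hb _]]]]]]].
      { intros z' Z. apply cstep_inb in Z as [E _]; discriminate. }
      { intros [_ E]; discriminate. }
      apply cstep_inb in T2 as [-> ->]. destruct a1; simpl in Hb; try contradiction.
      exfalso. apply N. exists r', z. eapply ps_sync; [exact T1|apply cs_inb|simpl; eauto].
    + destruct CFh as [t2 [z [-> [_ L]]]].
      destruct (comp_sync Ch Nr) as [a1 [a2 [r' [x' [T1 [T2 [Hb _]]]]]]].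
      { intros z' Z. apply cstep_outb in Z as [E _]; discriminate. }
      { intros [_ E]; discriminate. }
      apply cstep_outb in T2 as [-> ->]. destruct a1; simpl in Hb; try contradiction.
      exfalso. apply N. exists r', z. eapply ps_sync; [exact T1|apply cs_outb|simpl; eauto].
    + destruct CFh as [c2 [z [-> [_ L]]]].
      destruct (comp_sync Ch Nr) as [a1 [a2 [r' [x' [T1 [T2 [Hb _]]]]]]].
      { intros z' Z. apply cstep_inc in Z as [E _]; discriminate. }
      { intros [_ E]; discriminate. }
      apply cstep_inc in T2 as [-> ->]. destruct a1; simpl in Hb; try contradiction.
      exfalso. apply N. exists r', z. eapply ps_sync; [exact T1|apply cs_inc|simpl; eauto].
    + destruct CFh as [c2 [z [-> [_ L]]]].
      destruct (comp_sync Ch Nr) as [a1 [a2 [r' [x' [T1 [T2 [Hb _]]]]]]].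
      { intros z' Z. apply cstep_outc in Z as [E _]; discriminate. }
      { intros [_ E]; discriminate. }
      apply cstep_outc in T2 as [-> ->]. destruct a1; simpl in Hb; try contradiction.
      exfalso. apply N. exists r', z. eapply ps_sync; [exact T1|apply cs_outc|simpl; eauto].
    + destruct CFh as [bs' [-> Hbs]].
      destruct (comp_sync Ch Nr) as [a1 [a2 [r' [x' [T1 [T2 [Hb _]]]]]]].
      { apply notau_ext. }
      { intros [_ E]; discriminate. }
      apply cstep_ext in T2 as [l [-> Hin]]. destruct a1; simpl in Hb; try contradiction. subst.
      destruct (Hbs _ _ Hin) as [y [Hy _]].
      exfalso. apply N. exists r', y. eapply ps_sync; [exact T1|apply cs_ext; exact Hy|simpl; auto].
    + destruct CFh as [bs' [-> Hbs]].
      destruct bs' as [|[l y] bs0]; [exfalso; apply (nonnil_int St); auto|].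
      destruct bs0 as [|q bs0].
      2: { exfalso. eapply Nt. apply cs_int with (l := l) (s := y). simpl; lia. left; auto. }
      destruct (Hbs l y) as [x [Hin _]]; [left; auto|].
      assert (C1' := comp_commit _ _ Ch Hin).
      destruct (comp_sync C1' Nr) as [a1 [a2 [r' [x' [T1 [T2 [Hb _]]]]]]].
      { apply notau_single. }
      { intros [_ E]; discriminate. }
      apply det_single in T2 as [-> ->]. destruct a1; simpl in Hb; try contradiction. subst.
      exfalso. apply N. exists r', y. eapply ps_sync; [exact T1|apply cs_outl|simpl; auto].
    + exfalso; eapply Nmh; eauto.
    + exfalso; eapply Nvh; eauto.
  - intros r' t' P. left. inversion P as [? ? ? T|? ? ? T|? ? ? ? a1 a2 T1 T2 Hb]; subst.
    + split; [apply (cstep_SC Sr T)|]. split; [assumption|]. exists s.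
      split; [assumption|]. split; [eapply comp_tau_l; eauto|assumption].
    + split; [auto|split; [apply (cstep_SC St T)|]].
      destruct (tau_shape T) as [[x [b ->]]|[bs' [l [y [-> [L [Hin ->]]]]]]].
      * apply cstep_mu in T as [_ ->]. exists s. split; auto. split; auto.
        destruct QQst as [Hq|[? [? [? [_ [E _]]]]]]; [left; apply HQmu; auto|discriminate].
      * rewrite (@hnf_id _ (CInt bs')) in CFh by (intros ? ? ?; discriminate).
        apply CF_int in CFh as [bs [Eh Hbs]]. destruct (Hbs _ _ Hin) as [x [Hx Qxy]].
        exists (CInt [(l, x)]). split; [apply SC_int_single; eapply SC_int_branch; [rewrite <- Eh; exact Sh|exact Hx]|].
        split; [eapply comp_commit; [rewrite <- Eh; exact Ch|exact Hx]|].
        right. exists l, x, y. auto.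
    + assert (A2 : a2 <> ATau) by (intros ->; destruct a1; simpl in Hb; auto).
      assert (A1 : a1 <> ATau) by (intros ->; destruct a2; simpl in Hb; auto).
      split; [apply (cstep_SC Sr T1)|split; [apply (cstep_SC St T2)|]].
      destruct (mu_dec t) as [[x [b ->]]|Nmt]; [apply cstep_mu in T2 as [-> _]; congruence|].
      rewrite (hnf_id Nmt) in CFh.
      destruct t as [|t2 z|t2 z|c2 z|c2 z|bs'|bs'|x b|y].
      * exfalso; eapply cstep_C1; eauto.
      * apply cstep_inb in T2 as [-> ->]. apply CF_inb in CFh as [t1 [x [Eh [Qxz _]]]].
        destruct a1; simpl in Hb; try contradiction. apply act_outb in T1 as ->.
        rewrite Eh in Ch, Sh. exists x. split; [apply (cstep_SC Sh (cs_inb _ _))|split; [|left; auto]].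
        eapply comp_prefix; eauto; try discriminate.
        -- intros z' Z; apply cstep_inb in Z as [E _]; discriminate.
        -- apply cs_outb.
        -- intros a' r'' Z; apply cstep_outb in Z as [_ ->]; auto.
        -- intros a' x' Z; apply cstep_inb in Z as [_ ->]; auto.
      * apply cstep_outb in T2 as [-> ->]. apply CF_outb in CFh as [t1 [x [Eh [Qxz _]]]].
        destruct a1; simpl in Hb; try contradiction. apply act_inb in T1 as ->.
        rewrite Eh in Ch, Sh. exists x. split; [apply (cstep_SC Sh (cs_outb _ _))|split; [|left; auto]].
        eapply comp_prefix; eauto; try discriminate.
        -- intros z' Z; apply cstep_outb in Z as [E _]; discriminate.
        -- apply cs_inb.
        -- intros a' r'' Z; apply cstep_inb in Z as [_ ->]; auto.
        -- intros a' x' Z; apply cstep_outb in Z as [_ ->]; auto.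
      * apply cstep_inc in T2 as [-> ->]. apply CF_inc in CFh as [c1 [x [Eh [Qxz _]]]].
        destruct a1; simpl in Hb; try contradiction. apply act_outc in T1 as ->.
        rewrite Eh in Ch, Sh. exists x. split; [apply (cstep_SC Sh (cs_inc _ _))|split; [|left; auto]].
        eapply comp_prefix; eauto; try discriminate.
        -- intros z' Z; apply cstep_inc in Z as [E _]; discriminate.
        -- apply cs_outc.
        -- intros a' r'' Z; apply cstep_outc in Z as [_ ->]; auto.
        -- intros a' x' Z; apply cstep_inc in Z as [_ ->]; auto.
      * apply cstep_outc in T2 as [-> ->]. apply CF_outc in CFh as [c1 [x [Eh [Qxz _]]]].
        destruct a1; simpl in Hb; try contradiction. apply act_inc in T1 as ->.
        rewrite Eh in Ch, Sh. exists x. split; [apply (cstep_SC Sh (cs_outc _ _))|split; [|left; auto]].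
        eapply comp_prefix; eauto; try discriminate.
        -- intros z' Z; apply cstep_outc in Z as [E _]; discriminate.
        -- apply cs_inc.
        -- intros a' r'' Z; apply cstep_inc in Z as [_ ->]; auto.
        -- intros a' x' Z; apply cstep_outc in Z as [_ ->]; auto.
      * apply cstep_ext in T2 as [l [-> Hin]]. apply CF_ext in CFh as [bs [Eh Hbs]].
        destruct a1; simpl in Hb; try contradiction. subst l0. apply act_outl in T1 as ->.
        rewrite Eh in Ch, Sh.
        destruct (comp_sync Ch (@notau_single _ l r') (@notau_ext _ bs)) as [b1 [b2 [r1 [x1 [U1 [U2 [Hb' C1']]]]]]].
        { intros [E _]; discriminate. }
        apply det_single in U1 as [-> ->]. destruct b2; simpl in Hb'; try contradiction. subst l0.
        apply cstep_ext in U2 as [l1 [E Hx1]]. injection E as <-.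
        destruct (Hbs _ _ Hx1) as [y [Hy Qy]].
        assert (y = t') by (eapply nodup_uniq; eauto; apply nodup_ext; auto). subst y.
        exists x1. split; [eapply SC_ext_branch; eauto|split; auto].
      * apply cstep_int in T2 as [[l [-> E]]|[-> _]]; [|congruence]. subst bs'.
        apply CF_int in CFh as [bs [Eh Hbs]].
        destruct a1; simpl in Hb; try contradiction. subst l0.
        destruct (Hbs l t') as [x [Hx Qx]]; [left; auto|].
        rewrite Eh in Ch, Sh. assert (C1' := comp_commit _ _ Ch Hx).
        exists x. split; [eapply SC_int_branch; eauto|split; [|left; auto]].
        apply (comp_inv C1'). eapply ps_sync; [exact T1|apply cs_outl|simpl; auto].
      * exfalso; eapply Nmt; eauto.
      * exfalso; eapply cstep_var; eauto.
Qed.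

End Transfer.

Section Extract.
Variable BT : Type.
Notation ctb := (ct BT).
Variable leb : BT -> BT -> Prop.
Variable B : ctb -> ctb -> Prop.
Hypothesis Hl : forall t, leb t t.
Hypothesis HBpre : preorder_on_SC B.
Hypothesis HBpost : forall a b, B a b -> subc_B leb B a b.
Notation comp := (compliant leb B).
Notation ps := (pstep leb B).
Notation Sb := (subc_B leb B).

Lemma HBr : forall c, SC c -> B c c.
Proof. apply HBpre. Qed.

Lemma SC_outb t (r : ctb) : SC r -> SC (COutB t r).
Proof. intros [A C]; split; auto. Qed.
Lemma SC_inb t (r : ctb) : SC r -> SC (CInB t r).
Proof. intros [A C]; split; auto. Qed.
Lemma SC_outc (c r : ctb) : SC c -> SC r -> SC (COutC c r).
Proof. intros [A C] [D E]; split; simpl; [rewrite A, D; auto|auto]. Qed.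
Lemma SC_inc (c r : ctb) : SC c -> SC r -> SC (CInC c r).
Proof. intros [A C] [D E]; split; simpl; [rewrite A, D; auto|auto]. Qed.

Lemma notau_partner (r h : ctb) : comp r h -> NoTau r -> (forall l r', ~ cstep r (AInL l) r') ->
  notmu h -> NoTau h.
Proof.
  intros C Nr NI Nm h' T. destruct (tau_shape T) as [[x [b E]]|[bs [l [y [-> [L [Hin ->]]]]]]].
  - eapply Nm; eauto.
  - assert (C1 := comp_commit _ _ C Hin).
    destruct (comp_stuck C1 Nr (@notau_single _ l y)) as [_ E]; [|discriminate].
    intros a1 a2 r' s' T1 T2 Hb. apply det_single in T2 as [-> ->].
    destruct a1; simpl in Hb; try contradiction. subst. eapply NI; eauto.
Qed.

Lemma extract (s t : ctb) : Sb s t -> CF leb Sb (hnf s) (hnf t).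
Proof.
  intros [Ss [St P]].
  destruct (hnf_props Ss) as [Sh [Mh [Nmh Nvh]]].
  destruct (hnf_props St) as [Sk [Mk [Nmk Nvk]]].
  assert (P' : forall r, SC r -> comp r (hnf s) -> comp r (hnf t)).
  { intros r Sr C. eapply comp_mus_r; [|exact Mk]. apply P; auto. eapply comp_mus_back; eauto. }
  clear P Mh Mk.
  remember (hnf t) as k eqn:Ek. clear Ek.
  remember (hnf s) as h eqn:Eh. clear Eh.
  destruct h as [|t1 x|t1 x|c1 x|c1 x|bs|bs|x b|y]; simpl.
  -
    assert (C0 := P' C1 Sh (@comp_C1C1 BT leb B)).
    assert (Nk : NoTau k) by (eapply notau_partner; eauto; [apply notau_C1|intros l r' Z; inversion Z]).
    destruct (comp_stuck C0 (@notau_C1 _) Nk) as [_ ->]; auto.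
    intros a1 a2 r' s' Z; inversion Z.
  -
    assert (Sx : SC x) by (destruct Sh; split; auto).
    assert (Probe : forall r, SC r -> comp r x -> comp (COutB t1 r) (CInB t1 x)).
    { intros r Sr C. apply comp_intro; [apply SC_outb; auto|auto| |].
      - exists r, x. eapply ps_sync; [apply cs_outb|apply cs_inb|simpl; auto].
      - intros a' b' Q. inversion Q as [? ? ? T|? ? ? T|? ? ? ? a1 a2 T1 T2 Hb]; subst.
        + apply cstep_outb in T as [E _]; discriminate.
        + apply cstep_inb in T as [E _]; discriminate.
        + apply cstep_outb in T1 as [_ ->]. apply cstep_inb in T2 as [_ ->]. auto. }
    assert (C0 := P' _ (SC_outb t1 (SC_dual Sx)) (Probe _ (SC_dual Sx) (comp_dual leb B Hl HBr Sx))).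
    assert (Nk : NoTau k).
    { eapply notau_partner; eauto. intros z Z; apply cstep_outb in Z as [E _]; discriminate.
      intros l r' Z; apply cstep_outb in Z as [E _]; discriminate. }
    destruct (comp_sync C0) as [a1 [a2 [r' [z [T1 [T2 [Hb _]]]]]]]; auto.
    { intros z Z; apply cstep_outb in Z as [E _]; discriminate. }
    { intros [E _]; discriminate. }
    apply cstep_outb in T1 as [-> _]. destruct a2; simpl in Hb; try contradiction.
    apply act_inb in T2 as ->. eexists; exists z. split; [reflexivity|]. split; auto.
    split; [auto|split; [apply (cstep_SC Sk (cs_inb _ _))|]].
    intros r Sr C. assert (C1 := P' _ (SC_outb t1 Sr) (Probe _ Sr C)).
    apply (comp_inv C1). eapply ps_sync; [apply cs_outb|apply cs_inb|simpl; auto].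
  -
    assert (Sx : SC x) by (destruct Sh; split; auto).
    assert (Probe : forall r, SC r -> comp r x -> comp (CInB t1 r) (COutB t1 x)).
    { intros r Sr C. apply comp_intro; [apply SC_inb; auto|auto| |].
      - exists r, x. eapply ps_sync; [apply cs_inb|apply cs_outb|simpl; auto].
      - intros a' b' Q. inversion Q as [? ? ? T|? ? ? T|? ? ? ? a1 a2 T1 T2 Hb]; subst.
        + apply cstep_inb in T as [E _]; discriminate.
        + apply cstep_outb in T as [E _]; discriminate.
        + apply cstep_inb in T1 as [_ ->]. apply cstep_outb in T2 as [_ ->]. auto. }
    assert (C0 := P' _ (SC_inb t1 (SC_dual Sx)) (Probe _ (SC_dual Sx) (comp_dual leb B Hl HBr Sx))).
    assert (Nk : NoTau k).
    { eapply notau_partner; eauto. intros z Z; apply cstep_inb in Z as [E _]; discriminate.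
      intros l r' Z; apply cstep_inb in Z as [E _]; discriminate. }
    destruct (comp_sync C0) as [a1 [a2 [r' [z [T1 [T2 [Hb _]]]]]]]; auto.
    { intros z Z; apply cstep_inb in Z as [E _]; discriminate. }
    { intros [E _]; discriminate. }
    apply cstep_inb in T1 as [-> _]. destruct a2; simpl in Hb; try contradiction.
    apply act_outb in T2 as ->. eexists; exists z. split; [reflexivity|]. split; auto.
    split; [auto|split; [apply (cstep_SC Sk (cs_outb _ _))|]].
    intros r Sr C. assert (C1 := P' _ (SC_inb t1 Sr) (Probe _ Sr C)).
    apply (comp_inv C1). eapply ps_sync; [apply cs_inb|apply cs_outb|simpl; auto].
  -
    destruct (SC_pre1 Sh) as [Sc Sx].
    assert (Probe : forall r, SC r -> comp r x -> comp (COutC c1 r) (CInC c1 x)).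
    { intros r Sr C. apply comp_intro; [apply SC_outc; auto|auto| |].
      - exists r, x. eapply ps_sync; [apply cs_outc|apply cs_inc|simpl; apply HBr; auto].
      - intros a' b' Q. inversion Q as [? ? ? T|? ? ? T|? ? ? ? a1 a2 T1 T2 Hb]; subst.
        + apply cstep_outc in T as [E _]; discriminate.
        + apply cstep_inc in T as [E _]; discriminate.
        + apply cstep_outc in T1 as [_ ->]. apply cstep_inc in T2 as [_ ->]. auto. }
    assert (C0 := P' _ (SC_outc Sc (SC_dual Sx)) (Probe _ (SC_dual Sx) (comp_dual leb B Hl HBr Sx))).
    assert (Nk : NoTau k).
    { eapply notau_partner; eauto. intros z Z; apply cstep_outc in Z as [E _]; discriminate.
      intros l r' Z; apply cstep_outc in Z as [E _]; discriminate. }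
    destruct (comp_sync C0) as [a1 [a2 [r' [z [T1 [T2 [Hb _]]]]]]]; auto.
    { intros z Z; apply cstep_outc in Z as [E _]; discriminate. }
    { intros [E _]; discriminate. }
    apply cstep_outc in T1 as [-> _]. destruct a2; simpl in Hb; try contradiction.
    apply act_inc in T2 as ->. eexists; exists z. split; [reflexivity|]. split; [|apply HBpost; auto].
    split; [auto|split; [apply (cstep_SC Sk (cs_inc _ _))|]].
    intros r Sr C. assert (C1 := P' _ (SC_outc Sc Sr) (Probe _ Sr C)).
    apply (comp_inv C1). eapply ps_sync; [apply cs_outc|apply cs_inc|simpl; auto].
  -
    destruct (SC_pre2 Sh) as [Sc Sx].
    assert (Probe : forall r, SC r -> comp r x -> comp (CInC c1 r) (COutC c1 x)).
    { intros r Sr C. apply comp_intro; [apply SC_inc; auto|auto| |].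
      - exists r, x. eapply ps_sync; [apply cs_inc|apply cs_outc|simpl; apply HBr; auto].
      - intros a' b' Q. inversion Q as [? ? ? T|? ? ? T|? ? ? ? a1 a2 T1 T2 Hb]; subst.
        + apply cstep_inc in T as [E _]; discriminate.
        + apply cstep_outc in T as [E _]; discriminate.
        + apply cstep_inc in T1 as [_ ->]. apply cstep_outc in T2 as [_ ->]. auto. }
    assert (C0 := P' _ (SC_inc Sc (SC_dual Sx)) (Probe _ (SC_dual Sx) (comp_dual leb B Hl HBr Sx))).
    assert (Nk : NoTau k).
    { eapply notau_partner; eauto. intros z Z; apply cstep_inc in Z as [E _]; discriminate.
      intros l r' Z; apply cstep_inc in Z as [E _]; discriminate. }
    destruct (comp_sync C0) as [a1 [a2 [r' [z [T1 [T2 [Hb _]]]]]]]; auto.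
    { intros z Z; apply cstep_inc in Z as [E _]; discriminate. }
    { intros [E _]; discriminate. }
    apply cstep_inc in T1 as [-> _]. destruct a2; simpl in Hb; try contradiction.
    apply act_outc in T2 as ->. eexists; exists z. split; [reflexivity|]. split; [|apply HBpost; auto].
    split; [auto|split; [apply (cstep_SC Sk (cs_outc _ _))|]].
    intros r Sr C. assert (C1 := P' _ (SC_inc Sc Sr) (Probe _ Sr C)).
    apply (comp_inv C1). eapply ps_sync; [apply cs_inc|apply cs_outc|simpl; auto].
  -
    assert (Probe : forall l x r, In (l, x) bs -> SC r -> comp r x -> comp (CInt [(l, r)]) (CExt bs)).
    { intros l x r Hin Sr C. apply comp_intro; [apply SC_int_single; auto|auto| |].
      - exists r, x. eapply ps_sync; [apply cs_outl|apply cs_ext; exact Hin|simpl; auto].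
      - intros a' b' Q. inversion Q as [? ? ? T|? ? ? T|? ? ? ? a1 a2 T1 T2 Hb]; subst.
        + exfalso; eapply notau_single; eauto.
        + exfalso; eapply notau_ext; eauto.
        + apply det_single in T1 as [-> ->]. apply cstep_ext in T2 as [l1 [-> Hin1]].
          simpl in Hb; subst l1. assert (x = b') by (eapply nodup_uniq; eauto; apply nodup_ext; auto).
          subst; auto. }
    assert (Claim : forall l x, In (l, x) bs -> exists bs', k = CExt bs' /\ exists y, In (l, y) bs' /\ Sb x y).
    { intros l x Hin. assert (Sx : SC x) by (eapply SC_ext_branch; eauto).
      assert (C0 := P' _ (SC_int_single l (SC_dual Sx)) (Probe _ _ _ Hin (SC_dual Sx) (comp_dual leb B Hl HBr Sx))).
      assert (Nk : NoTau k).
      { eapply notau_partner; eauto. apply notau_single.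
        intros l0 r' Z; apply det_single in Z as [E _]; discriminate. }
      destruct (comp_sync C0) as [a1 [a2 [r' [z [T1 [T2 [Hb _]]]]]]]; auto.
      { apply notau_single. }
      { intros [E _]; discriminate. }
      apply det_single in T1 as [-> _]. destruct a2; simpl in Hb; try contradiction. subst l0.
      apply act_inl in T2 as [bs' [-> Hz]]. exists bs'. split; auto. exists z. split; auto.
      split; [auto|split; [eapply SC_ext_branch; eauto|]].
      intros r Sr C. assert (C1 := P' _ (SC_int_single l Sr) (Probe _ _ _ Hin Sr C)).
      apply (comp_inv C1). eapply ps_sync; [apply cs_outl|apply cs_ext; exact Hz|simpl; auto]. }
    destruct bs as [|[l0 x0] bs0]; [exfalso; apply (nonnil_ext Sh); auto|].
    destruct (Claim l0 x0) as [bs' [-> _]]; [left; auto|].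
    exists bs'. split; auto. intros l x Hin. destruct (Claim l x Hin) as [bs'' [E H]].
    injection E as <-. auto.
  -
    assert (Cd : comp (dual (CInt bs)) (CInt bs)) by (apply comp_dual; auto; apply HBr).
    assert (Ck := P' _ (SC_dual Sh) Cd).
    assert (Hd : dual (CInt bs) = CExt (map (fun p => (fst p, dual (snd p))) bs)) by reflexivity.
    rewrite Hd in Ck.
    assert (Ek : exists bs', k = CInt bs').
    { destruct (classic (NoTau k)) as [Nk|Nk].
      - destruct (comp_sync Ck (@notau_ext _ _) Nk) as [a1 [a2 [r' [z [T1 [T2 [Hb _]]]]]]].
        { intros [E _]; discriminate. }
        apply cstep_ext in T1 as [l [-> _]]. destruct a2; simpl in Hb; try contradiction.
        apply act_outl in T2. eauto.
      - apply NNPP; intros N. apply Nk. intros k' T.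
        destruct (tau_shape T) as [[x [b E]]|[bs' [l [y [E _]]]]]; [eapply Nmk; eauto|eauto]. }
    destruct Ek as [bs' ->]. exists bs'. split; auto.
    intros l y Hin.
    assert (Sy : SC y) by (eapply SC_int_branch; eauto).
    assert (C1 := comp_commit _ _ Ck Hin).
    destruct (comp_sync C1 (@notau_ext _ _) (@notau_single _ l y)) as [a1 [a2 [r' [z [T1 [T2 [Hb _]]]]]]].
    { intros [E _]; discriminate. }
    apply det_single in T2 as [-> ->]. apply cstep_ext in T1 as [l1 [-> Hin1]].
    simpl in Hb; subst l1. apply in_map_iff in Hin1 as [[l2 x] [Eq Hx]]. simpl in Eq.
    injection Eq as E1 E2. subst l2. exists x. split; [exact Hx|].
    assert (Sx : SC x) by (apply (SC_int_branch _ _ Sh Hx)).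
    split; [auto|split; [auto|]].
    intros r Sr C.
    set (g := fun p : label * ctb => (fst p, if Nat.eqb (fst p) l then r else dual (snd p))).
    set (r0 := CExt (map g bs)).
    assert (Hg : forall l' r1, In (l', r1) (map g bs) ->
       exists x', In (l', x') bs /\ r1 = if Nat.eqb l' l then r else dual x').
    { intros l' r1 H. apply in_map_iff in H as [[l3 x3] [Eq H]]. unfold g in Eq; simpl in Eq.
      injection Eq as <- <-. eauto. }
    assert (S0 : SC r0).
    { split.
      - apply nil_iff. intros z Hz. apply in_flat_map in Hz as [[l3 r3] [H3 Hz]]. cbn [snd] in Hz.
        destruct (Hg _ _ H3) as [x3 [Hx3 ->]]. destruct (Nat.eqb l3 l).
        + change (In z (ct_fv r)) in Hz. destruct Sr as [F _]. rewrite F in Hz; auto.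
        + change (In z (ct_fv (dual x3))) in Hz.
          destruct (SC_dual (SC_int_branch _ _ Sh Hx3)) as [F _]. rewrite F in Hz; auto.
      - apply ct_ok_iff_ext. split; [apply map_nonnil; apply (nonnil_int Sh)|split].
        + unfold g. rewrite map_map. simpl. rewrite <- map_map with (g := fst) (f := fun p => p).
          rewrite map_id. apply (nodup_int Sh).
        + apply Forall_forall. intros [l3 r3] H3. simpl.
          destruct (Hg _ _ H3) as [x3 [Hx3 ->]]. destruct (Nat.eqb l3 l).
          * apply Sr.
          * apply (SC_dual (SC_int_branch _ _ Sh Hx3)). }
    assert (Sub : forall l' x', In (l', x') bs -> comp r0 (CInt [(l', x')])).
    { intros l' x' H'. assert (Sx' : SC x') by (apply (SC_int_branch _ _ Sh H')).
      apply comp_intro; [auto|apply SC_int_single; auto| |].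
      - exists (if Nat.eqb l' l then r else dual x'), x'. eapply ps_sync.
        + apply cs_ext. apply in_map_iff. exists (l', x'). split; [reflexivity|exact H'].
        + apply cs_outl.
        + simpl; auto.
      - intros a' b' Q. inversion Q as [? ? ? T|? ? ? T|? ? ? ? a1 a2 T1 T2 Hb]; subst.
        + exfalso; eapply notau_ext; eauto.
        + exfalso; eapply notau_single; eauto.
        + apply det_single in T2 as [-> ->]. apply cstep_ext in T1 as [l3 [-> H3]].
          simpl in Hb; subst l3. destruct (Hg _ _ H3) as [x3 [Hx3 ->]].
          assert (x3 = x') by (eapply nodup_uniq; [apply (nodup_int Sh)|exact Hx3|exact H']). subst x3.
          destruct (Nat.eqb_spec l' l).
          * subst l'. assert (x = x') by (eapply nodup_uniq; [apply (nodup_int Sh)|exact Hx|exact H']).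
            subst; auto.
          * apply comp_dual; auto. apply HBr. }
    assert (C2 : comp r0 (CInt bs)).
    { destruct (Nat.le_gt_cases (length bs) 1) as [L|L].
      - rewrite (@single_of_len _ _ _ Hx L). apply Sub; auto.
      - apply comp_intro; auto.
        + exists r0, (CInt [(l, x)]). apply ps_r. apply cs_int; auto.
        + intros a' b' Q. inversion Q as [? ? ? T|? ? ? T|? ? ? ? a1 a2 T1 T2 Hb]; subst.
          * exfalso; eapply notau_ext; eauto.
          * apply cstep_int in T as [[? [E _]]|[_ [_ [l3 [x3 [H3 ->]]]]]]; [discriminate|].
            apply Sub; auto.
          * apply cstep_int in T2 as [[l3 [-> E]]|[-> _]].
            -- rewrite E in L. simpl in L. lia.
            -- destruct a1; simpl in Hb; contradiction. }
    assert (C3 := comp_commit _ _ (P' _ S0 C2) Hin).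
    apply (comp_inv C3). eapply ps_sync.
    + apply cs_ext. apply in_map_iff. exists (l, x). split; auto. unfold g; simpl.
      rewrite Nat.eqb_refl. reflexivity.
    + apply cs_outl.
    + simpl; auto.
  - exfalso; eapply Nmh; eauto.
  - exfalso; eapply Nvh; eauto.
Qed.

End Extract.

Section Glue.
Variable BT : Type.
Variable leb : BT -> BT -> Prop.
Hypothesis Hleb : PreOrder leb.

Lemma trM_inv_C1 (V : st BT) : trM V = C1 -> V = TEnd.
Proof. destruct V; simpl; intros H; try discriminate; auto. Qed.
Lemma trM_inv_inb (V : st BT) t z : trM V = CInB t z -> exists V2, V = TInB t V2 /\ z = trM V2.
Proof. destruct V; simpl; intros H; try discriminate. injection H; intros; subst; eauto. Qed.
Lemma trM_inv_outb (V : st BT) t z : trM V = COutB t z -> exists V2, V = TOutB t V2 /\ z = trM V2.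
Proof. destruct V; simpl; intros H; try discriminate. injection H; intros; subst; eauto. Qed.
Lemma trM_inv_inc (V : st BT) c z : trM V = CInC c z ->
  exists V1 V2, V = TInS V1 V2 /\ c = trM V1 /\ z = trM V2.
Proof. destruct V; simpl; intros H; try discriminate. injection H; intros; subst; eauto. Qed.
Lemma trM_inv_outc (V : st BT) c z : trM V = COutC c z ->
  exists V1 V2, V = TOutS V1 V2 /\ c = trM V1 /\ z = trM V2.
Proof. destruct V; simpl; intros H; try discriminate. injection H; intros; subst; eauto. Qed.
Lemma trM_inv_ext (V : st BT) bs : trM V = CExt bs ->
  exists bs0, V = TBra bs0 /\ bs = map (fun p => (fst p, trM (snd p))) bs0.
Proof. destruct V; simpl; intros H; try discriminate. injection H; intros; subst; eauto. Qed.
Lemma trM_inv_int (V : st BT) bs : trM V = CInt bs ->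
  exists bs0, V = TSel bs0 /\ bs = map (fun p => (fst p, trM (snd p))) bs0.
Proof. destruct V; simpl; intros H; try discriminate. injection H; intros; subst; eauto. Qed.

Lemma in_map_trM l x (bs : list (label * st BT)) :
  In (l, x) (map (fun p => (fst p, trM (snd p))) bs) -> exists X, In (l, X) bs /\ x = trM X.
Proof. intros H. apply in_map_iff in H as [[l0 X] [E H]]. simpl in E. injection E as <- <-. eauto. Qed.
Lemma in_map_trM' l X (bs : list (label * st BT)) :
  In (l, X) bs -> In (l, trM X) (map (fun p => (fst p, trM (snd p))) bs).
Proof. intros H. apply in_map_iff. exists (l, X); auto. Qed.

Lemma F_le_mono (R R' : st BT -> st BT -> Prop) : (forall a b, R a b -> R' a b) ->
  forall S T, F_le leb R S T -> F_le leb R' S T.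
Proof.
  intros HR S T [A [C D]]. split; [auto|split; [auto|]].
  destruct (st_unfold S); auto.
  - destruct D as [t2 [S2 [E [F G]]]]; eauto 10.
  - destruct D as [t2 [S2 [E [F G]]]]; eauto 10.
  - destruct D as [t2 [S2 [E [F G]]]]; eauto 10.
  - destruct D as [t2 [S2 [E [F G]]]]; eauto 10.
  - destruct D as [bs' [E F]]. exists bs'. split; auto. intros l Ti H.
    destruct (F l Ti H) as [Si [H1 H2]]; eauto.
  - destruct D as [bs' [E F]]. exists bs'. split; auto. intros l Si H.
    destruct (F l Si H) as [Ti [H1 H2]]; eauto.
Qed.

Lemma subtype_unf S T : subtype leb S T -> F_le leb (subtype leb) S T.
Proof.
  intros [R [HR H]]. eapply F_le_mono; [|apply HR; exact H].
  intros a b Hab. exists R; auto.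
Qed.

Lemma subtype_ST S T : subtype leb S T -> ST S /\ ST T.
Proof. intros H. destruct (subtype_unf H) as [A [C _]]; auto. Qed.

Definition Qs (s t : ct BT) : Prop := SC s /\ SC t /\
  exists S T, subtype leb S T /\ hnf s = hnf (trM S) /\ hnf t = hnf (trM T).

Lemma Qs_mk S T : subtype leb S T -> Qs (trM S) (trM T).
Proof.
  intros H. destruct (subtype_ST H) as [A C]. split; [apply ST_SC; auto|split; [apply ST_SC; auto|]].
  exists S, T; auto.
Qed.

Lemma Qs_CF s t : Qs s t -> SC s /\ SC t /\ CF leb Qs (hnf s) (hnf t).
Proof.
  intros [Ss [St [S [T [H [E1 E2]]]]]]. split; [auto|split; [auto|]].
  rewrite E1, E2, <- !trM_unfold.
  destruct (subtype_unf H) as [SS [ST' D]].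
  destruct (hnf_props (proj1 (ST_SC S) SS)) as [_ [_ [Nm Nv]]].
  rewrite <- trM_unfold in Nm, Nv.
  destruct (st_unfold S) as [|t1 S1|t1 S1|T1 S1|T1 S1|bs|bs|x b|y]; simpl.
  - rewrite D; reflexivity.
  - destruct D as [t2 [S2 [-> [F G]]]]. simpl. eexists; eexists; split; [reflexivity|]. split; auto.
    apply Qs_mk; auto.
  - destruct D as [t2 [S2 [-> [F G]]]]. simpl. eexists; eexists; split; [reflexivity|]. split; auto.
    apply Qs_mk; auto.
  - destruct D as [T2 [S2 [-> [F G]]]]. simpl. eexists; eexists; split; [reflexivity|].
    split; apply Qs_mk; auto.
  - destruct D as [T2 [S2 [-> [F G]]]]. simpl. eexists; eexists; split; [reflexivity|].
    split; apply Qs_mk; auto.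
  - destruct D as [bs' [-> F]]. simpl. eexists; split; [reflexivity|].
    intros l x Hin. apply in_map_trM in Hin as [X [Hin ->]].
    destruct (F _ _ Hin) as [Y [HY HXY]]. exists (trM Y). split; [apply in_map_trM'; auto|].
    apply Qs_mk; auto.
  - destruct D as [bs' [-> F]]. simpl. eexists; split; [reflexivity|].
    intros l y Hin. apply in_map_trM in Hin as [Y [Hin ->]].
    destruct (F _ _ Hin) as [X [HX HXY]]. exists (trM X). split; [apply in_map_trM'; auto|].
    apply Qs_mk; auto.
  - exfalso; eapply Nm; simpl; eauto.
  - exfalso; eapply Nv; simpl; eauto.
Qed.

Lemma Qs_mu s x b : Qs s (CMu x b) -> Qs s (ct_subst x (CMu x b) b).
Proof.
  intros [Ss [St [S [T [H [E1 E2]]]]]]. split; [auto|split; [apply SC_unfold; auto|]].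
  exists S, T. split; [auto|split; auto]. rewrite <- hnf_mu; auto. apply St.
Qed.

Definition Bs (a b : ct BT) : Prop := SC a /\ SC b /\ clos_refl_trans _ Qs a b.

Lemma leb_trans : forall a b c, leb a b -> leb b c -> leb a c.
Proof. intros a b c; apply Hleb. Qed.
Lemma leb_refl : forall a, leb a a.
Proof. apply Hleb. Qed.

Lemma Bs_trans : forall a b c, Bs a b -> Bs b c -> Bs a c.
Proof. intros a b c [A [_ C]] [_ [D E]]. split; [auto|split; [auto|]]. eapply rt_trans; eauto. Qed.

Lemma Bs_post_rt a b : clos_refl_trans _ Qs a b -> SC a -> subc_B leb Bs a b.
Proof.
  induction 1 as [a b H|a|a b c H1 IH1 H2 IH2]; intros Sa.
  - destruct (Qs_CF H) as [A [C _]]. split; [auto|split; [auto|]].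
    intros r Sr Cr.
    assert (HBQ : forall x y, Qs x y -> Bs x y).
    { intros x y Hxy. destruct (Qs_CF Hxy) as [E [F _]]. split; [auto|split; [auto|]]. apply rt_step; auto. }
    exact (@transfer BT leb Bs Qs leb_trans Bs_trans Qs_CF Qs_mu HBQ r a b H Cr).
  - split; [auto|split; auto].
  - destruct (IH1 Sa) as [A [C D]]. destruct (IH2 C) as [_ [E F]]. split; [auto|split; [auto|]].
    intros r Sr Cr; auto.
Qed.

Lemma dir1 S T : subtype leb S T -> peer_sub leb (trM S) (trM T).
Proof.
  intros H. exists Bs. split; [|split].
  - split; [intros a b [A [C _]]; auto|split].
    + intros a Sa. split; [auto|split; [auto|apply rt_refl]].
    + apply Bs_trans.
  - intros a b [A [C D]]. apply Bs_post_rt; auto.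
  - destruct (Qs_mk H) as [A [C _]]. split; [auto|split; [auto|]]. apply rt_step, Qs_mk; auto.
Qed.

Definition Rs (S T : st BT) : Prop := ST S /\ ST T /\
  exists B, preorder_on_SC B /\ (forall a b, B a b -> subc_B leb B a b) /\ subc_B leb B (trM S) (trM T).

Lemma Rs_post S T : Rs S T -> F_le leb Rs S T.
Proof.
  intros [SS [ST' [B [HBpre [HBpost Hs]]]]].
  split; [auto|split; [auto|]].
  assert (CFx := extract leb_refl HBpre HBpost Hs).
  rewrite <- !trM_unfold in CFx.
  assert (Mk : forall X Y, subc_B leb B (trM X) (trM Y) -> Rs X Y).
  { intros X Y H. destruct H as [A [C D]]. split; [apply ST_SC; auto|split; [apply ST_SC; auto|]].
    exists B. split; [auto|split; [auto|split; [auto|split; auto]]]. }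
  assert (MkB : forall X Y, B (trM X) (trM Y) -> Rs X Y) by (intros X Y H; apply Mk, HBpost; auto).
  destruct (st_unfold S) as [|t1 S1|t1 S1|T1 S1|T1 S1|bs|bs|x b|y]; simpl in CFx |- *; auto.
  - apply trM_inv_C1; auto.
  - destruct CFx as [t2 [z [E [F G]]]]. apply trM_inv_inb in E as [V2 [-> ->]]. eauto 10.
  - destruct CFx as [t2 [z [E [F G]]]]. apply trM_inv_outb in E as [V2 [-> ->]]. eauto 10.
  - destruct CFx as [c2 [z [E [F G]]]]. apply trM_inv_inc in E as [V1 [V2 [-> [-> ->]]]]. eauto 10.
  - destruct CFx as [c2 [z [E [F G]]]]. apply trM_inv_outc in E as [V1 [V2 [-> [-> ->]]]]. eauto 10.
  - destruct CFx as [bs' [E F]]. apply trM_inv_ext in E as [bs0 [-> ->]]. exists bs0. split; auto.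
    intros l Ti Hin. destruct (F _ _ (in_map_trM' _ _ _ Hin)) as [y [Hy Hs']].
    apply in_map_trM in Hy as [Y [HY ->]]. eauto.
  - destruct CFx as [bs' [E F]]. apply trM_inv_int in E as [bs0 [-> ->]]. exists bs0. split; auto.
    intros l Si Hin. destruct (F _ _ (in_map_trM' _ _ _ Hin)) as [x [Hx Hs']].
    apply in_map_trM in Hx as [X [HX ->]]. eauto.
Qed.

Lemma dir2 S T : ST S -> ST T -> peer_sub leb (trM S) (trM T) -> subtype leb S T.
Proof.
  intros SS ST' [B [HBpre [HBpost H]]]. exists Rs. split; [apply Rs_post|].
  split; [auto|split; [auto|]]. exists B. split; [auto|split; [auto|]]. apply HBpost; auto.
Qed.

End Glue.

Unset Implicit Arguments.

Theorem mainTheorem1 (BT : Type) (leb : BT -> BT -> Prop) (Hleb : PreOrder leb)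
  (S T : st BT) :
  ST S -> ST T -> (subtype leb S T <-> peer_sub leb (trM S) (trM T)).
Proof.
  intros SS ST'. split; [apply dir1; auto|apply dir2; auto].
Qed.
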